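(* Let $k\geq 2$ and consider the $\mathrm{SU}(2)_k$ anyon theory. Fix a charge $\mathfrak{j}$ with $0<\mathfrak{j}<k/2$, a total charge $J\in\mathcal{S}$, and $f\in(0,1)$. Consider system sizes $L\to\infty$ along a sequence for which $L_A=fL$ is an integer, $L_B=L-L_A$, and $D_J(L)>0$ (i.e. $2\mathfrak{j}L+2J$ is even). Let $\langle\tilde S_A\rangle_J$ be the Haar average of the anyonic entanglement entropy over unit vectors in $\mathcal{H}^J$, given by $\langle\tilde S_A\rangle_J=\sum_\alpha\varrho_\alpha\varphi_\alpha$ as in the context. Then, as $L\to\infty$, $$\langle\tilde S_A\rangle_J=\begin{cases} fL\log(d_\mathfrak{j})-\frac{1}{2d_J}\delta_{f,\frac12}+o(1), & f\le\frac12,\\[2pt] (1-f)L\log(d_\mathfrak{j})+\log(d_J)+o(1), & f>\frac12,\end{cases}$$ where $\delta_{f,1/2}=1$ if $f=1/2$ and $0$ otherwise.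
   Context: $\mathrm{SU}(2)_k$: charges $\mathcal{S}=\{0,\tfrac12,1,\dots,\tfrac k2\}$, all self-dual, with multiplicity-free fusion $j_1\otimes j_2=\bigoplus_{j=|j_1-j_2|}^{\min(j_1+j_2,\,k-j_1-j_2)}j$ (in integer steps), i.e. $N^{c}_{ab}=1$ for those $c$ and $0$ otherwise. Modular $S$-matrix $S_{ab}=\sqrt{\tfrac{2}{k+2}}\sin\!\big(\tfrac{(2a+1)(2b+1)\pi}{k+2}\big)$; quantum dimensions $d_a=S_{a0}/S_{00}=\sin\!\big(\tfrac{(2a+1)\pi}{k+2}\big)/\sin\!\big(\tfrac{\pi}{k+2}\big)$. $D_c(n)$ is the number of fusion paths of $n$ anyons of charge $\mathfrak{j}$ to total charge $c$: $\sum_{x_2,\dots,x_{n-1}}N^{x_2}_{\mathfrak{j}\mathfrak{j}}N^{x_3}_{x_2\mathfrak{j}}\cdots N^{c}_{x_{n-1}\mathfrak{j}}$, and $\mathcal{H}^J$ is the fusion space of $L$ such anyons with total charge $J$, of dimension $D_J=D_J(L)$. With $m_\alpha=D_\alpha(L_A)$, $n_\alpha=\sum_{\beta:N^J_{\alpha\beta}=1}D_\beta(L_B)$ (so $\mathcal{H}^J\cong\bigoplus_\alpha\mathbb{C}^{m_\alpha}\otimes\mathbb{C}^{n_\alpha}$), the Haar-averaged anyonic entanglement entropy is $\langle\tilde S_A\rangle_J=\sum_{\alpha: m_\alpha n_\alpha>0}\varrho_\alpha\varphi_\alpha$ with $\varrho_\alpha=m_\alpha n_\alpha/D_J$ and $\varphi_\alpha=\Psi(D_J+1)-\Psi(\max(m_\alpha,n_\alpha)+1)-\min\!\big(\frac{m_\alpha-1}{2n_\alpha},\frac{n_\alpha-1}{2m_\alpha}\big)+\log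 d_\alpha$ ($\Psi$ the digamma function). Here the anyonic entanglement entropy of a unit vector $\Psi=\bigoplus_\alpha\Psi_\alpha$ is $-\sum_\alpha p_\alpha\log p_\alpha+\sum_\alpha p_\alpha(-\sum_i\lambda_{\alpha,i}\log\lambda_{\alpha,i}+\log d_\alpha)$, where $p_\alpha=\|\Psi_\alpha\|^2$ and $\lambda_{\alpha,i}$ are the eigenvalues of $\mathrm{tr}_{\mathbb{C}^{n_\alpha}}(\Psi_\alpha\Psi_\alpha^\dagger)/p_\alpha$. *)

(* Defs.v *)
From Stdlib Require Import Reals List Arith.
From Coquelicot Require Import Coquelicot.
Open Scope R_scope.

(* Charges of SU(2)_k are encoded by twice their spin: a spin j is the
   natural number 2j, with 0 <= 2j <= k. *)

Definition fusionN (k a b c : nat) : bool :=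
  Nat.leb (Nat.max a b - Nat.min a b) c &&
  Nat.leb c (Nat.min (a + b) (2 * k - (a + b))) &&
  Nat.even (a + b + c) &&
  Nat.leb a k && Nat.leb b k && Nat.leb c k.

Definition natsum (f : nat -> nat) (n : nat) : nat :=
  fold_right Nat.add 0%nat (map f (seq 0 n)).

Definition Rsum (f : nat -> R) (n : nat) : R :=
  fold_right Rplus 0 (map f (seq 0 n)).

(* Dpaths k jj n c = D_c(n): number of fusion paths of n anyons of (doubled)
   charge jj to total (doubled) charge c. *)
Fixpoint Dpaths (k jj n c : nat) : nat :=
  match n with
  | O => if Nat.eqb c 0 then 1%nat else 0%nat
  | S n' => natsum (fun x => if fusionN k x jj c then Dpaths k jj n' x else 0%nat) (S k)
  end.

Definition qdim (k a : nat) : R :=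
  sin (INR (a + 1) * PI / INR (k + 2)) / sin (PI / INR (k + 2)).

Definition harmonic (n : nat) : R :=
  fold_right Rplus 0 (map (fun i => / INR i) (seq 1 n)).

Definition euler_gamma : R :=
  real (Lim_seq (fun n => harmonic n - ln (INR n))).

Definition digamma_nat (n : nat) : R := harmonic (n - 1) - euler_gamma.

Definition m_alpha (k jj LA alpha : nat) : nat := Dpaths k jj LA alpha.

Definition n_alpha (k jj JJ LB alpha : nat) : nat :=
  natsum (fun beta => if fusionN k alpha beta JJ then Dpaths k jj LB beta else 0%nat) (S k).

Definition avgEntropy (k jj JJ L LA : nat) : R :=
  let LB := (L - LA)%nat in
  let DJ := Dpaths k jj L JJ in
  Rsum (fun alpha =>
    let m := m_alpha k jj LA alpha in
    let n := n_alpha k jj JJ LB alpha in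
    if Nat.ltb 0 (m * n) then
      (INR m * INR n / INR DJ) *
      (digamma_nat (DJ + 1) - digamma_nat (Nat.max m n + 1)
       - Rmin ((INR m - 1) / (2 * INR n)) ((INR n - 1) / (2 * INR m))
       + ln (qdim k alpha))
    else 0) (S k).

Definition mainTerm (k jj JJ L : nat) (f : R) : R :=
  if Rle_dec f (1/2) then
    f * INR L * ln (qdim k jj)
    - (if Req_EM_T f (1/2) then 1 / (2 * qdim k JJ) else 0)
  else (1 - f) * INR L * ln (qdim k jj) + ln (qdim k JJ).

(* Main.v *)
Require Import Defs.
From Stdlib Require Import Reals Lra Lia Arith List.
Open Scope R_scope.

Lemma fold_Rplus_acc (l : list R) (a : R) :
  fold_right Rplus a l = fold_right Rplus 0 l + a.
Proof. induction l as [|x l IH]; simpl; [lra| rewrite IH; lra]. Qed.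

Lemma Rsum_0 f : Rsum f 0 = 0.
Proof. reflexivity. Qed.

Lemma Rsum_S f n : Rsum f (S n) = Rsum f n + f n.
Proof.
  unfold Rsum. rewrite seq_S, map_app, fold_right_app. simpl.
  rewrite fold_Rplus_acc. lra.
Qed.

Lemma Rsum_shift f n : Rsum f (S n) = f O + Rsum (fun i => f (S i)) n.
Proof.
  induction n as [|n IH].
  - rewrite Rsum_S, !Rsum_0. lra.
  - rewrite Rsum_S, IH, Rsum_S. lra.
Qed.

Lemma Rsum_ext f g n : (forall i, (i < n)%nat -> f i = g i) -> Rsum f n = Rsum g n.
Proof.
  induction n as [|n IH]; intros H; [reflexivity|].
  rewrite !Rsum_S. rewrite IH by (intros; apply H; lia). rewrite H by lia. reflexivity.
Qed.

Lemma Rsum_plus f g n : Rsum (fun i => f i + g i) n = Rsum f n + Rsum g n.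
Proof. induction n as [|n IH]; [unfold Rsum; simpl; lra|rewrite !Rsum_S, IH; lra]. Qed.

Lemma Rsum_minus f g n : Rsum (fun i => f i - g i) n = Rsum f n - Rsum g n.
Proof. induction n as [|n IH]; [unfold Rsum; simpl; lra|rewrite !Rsum_S, IH; lra]. Qed.

Lemma Rsum_scal c f n : Rsum (fun i => c * f i) n = c * Rsum f n.
Proof. induction n as [|n IH]; [unfold Rsum; simpl; lra|rewrite !Rsum_S, IH; lra]. Qed.

Lemma Rsum_const0 n : Rsum (fun _ => 0) n = 0.
Proof. induction n as [|n IH]; [unfold Rsum; simpl; lra|rewrite !Rsum_S, IH; lra]. Qed.

Lemma Rsum_swap (F : nat -> nat -> R) n m :
  Rsum (fun i => Rsum (fun j => F i j) m) n = Rsum (fun j => Rsum (fun i => F i j) n) m.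
Proof.
  induction n as [|n IH].
  - rewrite Rsum_0. symmetry. apply Rsum_const0.
  - rewrite Rsum_S, IH. rewrite <- Rsum_plus. apply Rsum_ext. intros. rewrite Rsum_S. reflexivity.
Qed.

Lemma Rsum_delta (a : nat -> R) j n : (j < n)%nat ->
  Rsum (fun i => if Nat.eqb i j then a i else 0) n = a j.
Proof.
  induction n as [|n IH]; intros H; [lia|].
  rewrite Rsum_S. destruct (Nat.eq_dec j n) as [->|Hne].
  - rewrite Nat.eqb_refl. rewrite (Rsum_ext _ (fun _ => 0)).
    + rewrite Rsum_const0; lra.
    + intros i Hi. destruct (Nat.eqb_spec i n); [lia|reflexivity].
  - rewrite IH by lia. destruct (Nat.eqb_spec n j); [lia|lra].
Qed.

Lemma Rsum_le f g n : (forall i, (i < n)%nat -> f i <= g i) -> Rsum f n <= Rsum g n.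
Proof.
  induction n as [|n IH]; intros H; [unfold Rsum; simpl; lra|].
  rewrite !Rsum_S. assert (f n <= g n) by (apply H; lia).
  assert (Rsum f n <= Rsum g n) by (apply IH; intros; apply H; lia). lra.
Qed.

Lemma Rsum_nonneg f n : (forall i, (i < n)%nat -> 0 <= f i) -> 0 <= Rsum f n.
Proof.
  intros H. rewrite <- (Rsum_const0 n). apply Rsum_le. auto.
Qed.

Lemma Rsum_abs_le f n : Rabs (Rsum f n) <= Rsum (fun i => Rabs (f i)) n.
Proof.
  induction n as [|n IH]; [unfold Rsum; simpl; rewrite Rabs_R0; lra|].
  rewrite !Rsum_S. eapply Rle_trans; [apply Rabs_triang|]. lra.
Qed.

Lemma Rsum_ge_term f n j : (j < n)%nat -> (forall i, (i < n)%nat -> 0 <= f i) -> f j <= Rsum f n.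
Proof.
  induction n as [|n IH]; intros Hj H; [lia|].
  rewrite Rsum_S. destruct (Nat.eq_dec j n) as [->|Hne].
  - assert (0 <= Rsum f n) by (apply Rsum_nonneg; intros; apply H; lia). lra.
  - assert (f j <= Rsum f n) by (apply IH; [lia| intros; apply H; lia]).
    assert (0 <= f n) by (apply H; lia). lra.
Qed.

Lemma natsum_S f n : natsum f (S n) = (natsum f n + f n)%nat.
Proof.
  unfold natsum. rewrite seq_S, map_app, fold_right_app. simpl.
  generalize (map f (seq 0 n)). intros l. induction l; simpl; lia.
Qed.

Lemma INR_natsum f n : INR (natsum f n) = Rsum (fun i => INR (f i)) n.
Proof.
  induction n as [|n IH]; [reflexivity|].
  rewrite natsum_S, Rsum_S, plus_INR, IH. reflexivity.
Qed.

Lemma even_cases n : (exists m, n = (2*m)%nat /\ Nat.even n = true) \/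
                     (exists m, n = (2*m+1)%nat /\ Nat.even n = false).
Proof.
  destruct (Nat.Even_or_Odd n) as [[m Hm]|[m Hm]].
  - left. exists m. split; auto. apply Nat.even_spec. exists m; auto.
  - right. exists m. split; auto. subst. rewrite Nat.add_comm. 
    rewrite Nat.even_add_mul_2. reflexivity.
Qed.

Lemma even_true n : Nat.even n = true -> exists m, n = (2*m)%nat.
Proof. intros H. apply Nat.even_spec in H. exact H. Qed.

Lemma even_false n : Nat.even n = false -> exists m, n = (2*m+1)%nat.
Proof. intros H. destruct (even_cases n) as [[m [_ E]]|[m [Hm _]]]; [congruence|eauto]. Qed.

Lemma even_intro n m : n = (2*m)%nat -> Nat.even n = true.
Proof. intros ->. apply Nat.even_spec. exists m; auto. Qed.

Lemma odd_intro n m : n = (2*m+1)%nat -> Nat.even n = false.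
Proof. intros ->. rewrite Nat.add_comm, Nat.even_add_mul_2. reflexivity. Qed.

Definition th (k : nat) : R := PI / INR (k + 2).
Definition sv (k a b : nat) : R := sin (INR (S a) * INR (S b) * th k).

Lemma th_pos k : 0 < th k.
Proof. unfold th. apply Rdiv_lt_0_compat; [apply PI_RGT_0| apply lt_0_INR; lia]. Qed.

Lemma th_N k : INR (k+2) * th k = PI.
Proof. unfold th. field. apply not_0_INR. lia. Qed.

Lemma sin_mPI_minus m x : sin (INR m * PI - x) = - (-1)^m * sin x.
Proof.
  induction m as [|m IH].
  - simpl. replace (0 * PI - x) with (- x) by ring. rewrite sin_neg. ring.
  - rewrite S_INR. replace ((INR m + 1) * PI - x) with ((INR m * PI - x) + PI) by ring.
    rewrite neg_sin, IH. simpl. ring.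
Qed.

Lemma cos_mPI_minus m x : cos (INR m * PI - x) = (-1)^m * cos x.
Proof.
  induction m as [|m IH].
  - simpl. replace (0 * PI - x) with (- x) by ring. rewrite cos_neg. ring.
  - rewrite S_INR. replace ((INR m + 1) * PI - x) with ((INR m * PI - x) + PI) by ring.
    rewrite neg_cos, IH. simpl. ring.
Qed.

Lemma sin_sin x y : sin x * sin y = (cos (x - y) - cos (x + y)) / 2.
Proof. rewrite cos_minus, cos_plus. field. Qed.

Lemma sin_cos2 u v : 2 * sin u * cos v = sin (v + u) - sin (v - u).
Proof. rewrite sin_plus, sin_minus. ring. Qed.

Lemma pow_m1_even j : (-1)^(2*j) = 1.
Proof. rewrite pow_mult. replace ((-1)^2) with 1 by ring. apply pow1. Qed.

Lemma cos_tel phi n :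
  Rsum (fun b => 2 * sin (phi/2) * cos (INR (S b) * phi)) n =
  sin ((INR n + /2) * phi) - sin (phi/2).
Proof.
  induction n as [|n IH].
  - rewrite Rsum_0. simpl. replace ((0 + /2) * phi) with (phi/2) by field. ring.
  - rewrite Rsum_S, IH, sin_cos2.
    replace (INR (S n) * phi - phi/2) with ((INR n + /2) * phi) by (rewrite S_INR; field).
    replace (INR (S n) * phi + phi/2) with ((INR (S n) + /2) * phi) by (field).
    ring.
Qed.

Lemma cos_sum_m k m : (0 < m)%nat -> (m < 2 * (k+2))%nat ->
  Rsum (fun b => cos (INR (S b) * (INR m * th k))) (S k) = - (1 + (-1)^m) / 2.
Proof.
  intros Hm1 Hm2.
  set (phi := INR m * th k).
  assert (Hs : 0 < sin (phi/2)).
  { apply sin_gt_0.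
    - unfold phi. apply Rdiv_lt_0_compat; [|lra]. apply Rmult_lt_0_compat; [apply lt_0_INR; lia|apply th_pos].
    - unfold phi, th. apply lt_INR in Hm2. rewrite mult_INR in Hm2. simpl (INR 2) in Hm2.
      assert (0 < INR (k+2)) by (apply lt_0_INR; lia).
      apply (Rmult_lt_reg_r (2 * INR (k+2))); [lra|].
      replace (INR m * (PI / INR (k + 2)) / 2 * (2 * INR (k + 2))) with (INR m * PI) by (field; lra).
      pose proof PI_RGT_0. nra. }
  pose proof (cos_tel phi (S k)) as T.
  rewrite Rsum_scal in T.
  assert (E : (INR (S k) + /2) * phi = INR m * PI - phi/2).
  { unfold phi. rewrite <- (th_N k). rewrite plus_INR. simpl (INR 2). rewrite S_INR. field. }
  rewrite E, sin_mPI_minus in T.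
  apply (Rmult_eq_reg_l (2 * sin (phi/2))); [|lra].
  rewrite T. field.
Qed.

Lemma sv_sym k a b : sv k a b = sv k b a.
Proof. unfold sv. f_equal. ring. Qed.

Lemma ortho k a c : (a <= k)%nat -> (c <= k)%nat ->
  Rsum (fun b => sv k a b * sv k c b) (S k) = if Nat.eqb a c then INR (k+2) / 2 else 0.
Proof.
  intros Ha Hc.
  assert (Gen : forall a c, (a <= k)%nat -> (c <= a)%nat ->
     Rsum (fun b => sv k a b * sv k c b) (S k) = if Nat.eqb a c then INR (k+2) / 2 else 0).
  { clear a c Ha Hc. intros a c Ha Hca.
    rewrite (Rsum_ext _ (fun b => (cos (INR (S b) * (INR (a - c) * th k)) -
                                    cos (INR (S b) * (INR (a + c + 2) * th k))) / 2)).
    2:{ intros b _. unfold sv. rewrite sin_sin. f_equal. f_equal.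
        - f_equal. rewrite minus_INR by lia. rewrite !S_INR. ring.
        - f_equal. rewrite !plus_INR. simpl (INR 2). rewrite !S_INR. ring. }
    unfold Rdiv. rewrite (Rsum_ext _ (fun b => /2 * (cos (INR (S b) * (INR (a - c) * th k)) -
                                    cos (INR (S b) * (INR (a + c + 2) * th k))))) by (intros; ring).
    rewrite Rsum_scal, Rsum_minus.
    rewrite (cos_sum_m k (a+c+2)) by lia.
    destruct (Nat.eqb_spec a c) as [->|Hne].
    - rewrite Nat.sub_diag. simpl INR at 1.
      rewrite (Rsum_ext _ (fun _ => 1)) by (intros; rewrite Rmult_0_l, Rmult_0_r; apply cos_0).
      assert (R1 : forall n, Rsum (fun _ => 1) n = INR n).
      { induction n; [reflexivity|rewrite Rsum_S, IHn, S_INR; ring]. }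
      rewrite R1. replace (c + c + 2)%nat with (2 * (c+1))%nat by lia. rewrite pow_m1_even.
      rewrite plus_INR. simpl (INR 2). rewrite S_INR. field.
    - rewrite (cos_sum_m k (a - c)) by lia.
      replace (a + c + 2)%nat with ((a - c) + 2 * (c+1))%nat by lia.
      rewrite pow_add, pow_m1_even. field. }
  destruct (le_lt_dec c a) as [H|H].
  - apply Gen; auto.
  - rewrite (Rsum_ext _ (fun b => sv k c b * sv k a b)) by (intros; ring).
    rewrite Gen by lia. destruct (Nat.eqb_spec a c), (Nat.eqb_spec c a); auto; lia.
Qed.

Definition ind (lo p x : nat) : bool :=
  Nat.leb lo x && Nat.leb x (lo + 2*p) && Nat.even (x + lo).

Ltac inr := rewrite ?plus_INR, ?mult_INR, ?S_INR, ?INR_0.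
Ltac par_case e := destruct (even_cases e) as [[?m [? ->]]|[?m [? ->]]].

Lemma ind_0 lo x : ind lo 0 x = Nat.eqb x lo.
Proof.
  unfold ind. destruct (Nat.leb_spec lo x), (Nat.leb_spec x (lo + 2*0)), (Nat.eqb_spec x lo);
  par_case (x + lo)%nat; simpl; auto; lia.
Qed.

Lemma ind_S_pt (g : nat -> R) lo p x :
  (if ind lo (S p) x then g x else 0) =
  (if ind lo p x then g x else 0) + (if Nat.eqb x (lo + 2*p + 2) then g x else 0).
Proof.
  unfold ind.
  destruct (Nat.leb_spec lo x), (Nat.leb_spec x (lo + 2*S p)), (Nat.leb_spec x (lo + 2*p)),
    (Nat.eqb_spec x (lo + 2*p+2)); par_case (x + lo)%nat; simpl; try lra; lia.
Qed.

Lemma step_tel (G : nat -> R) lo p n : (lo + 2*p < n)%nat ->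
  Rsum (fun x => if ind lo p x then G x - G (x+2)%nat else 0) n = G lo - G (lo + 2*p + 2)%nat.
Proof.
  induction p as [|p IH]; intros Hn.
  - rewrite (Rsum_ext _ (fun x => if Nat.eqb x lo then G x - G (x+2)%nat else 0)).
    + rewrite Rsum_delta by lia. f_equal. f_equal. f_equal. lia.
    + intros. rewrite ind_0. reflexivity.
  - rewrite (Rsum_ext _ (fun x => (if ind lo p x then G x - G (x+2)%nat else 0) +
        (if Nat.eqb x (lo + 2*p + 2) then G x - G (x+2)%nat else 0))).
    + rewrite Rsum_plus, IH by lia. rewrite Rsum_delta by lia.
      replace (lo + 2 * p + 2 + 2)%nat with (lo + 2 * S p + 2)%nat by lia. ring.
    + intros. apply (ind_S_pt (fun x => G x - G (x+2)%nat)).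
Qed.

Lemma fusion_ind k a c x : (a <= k)%nat -> (c <= k)%nat ->
  fusionN k x a c = ind (Nat.max a c - Nat.min a c) (Nat.min (Nat.min a c) (k - Nat.max a c)) x.
Proof.
  intros Ha Hc. unfold fusionN, ind.
  destruct (Nat.leb_spec (Nat.max x a - Nat.min x a) c),
    (Nat.leb_spec c (Nat.min (x + a) (2 * k - (x + a)))),
    (Nat.leb_spec x k), (Nat.leb_spec a k), (Nat.leb_spec c k),
    (Nat.leb_spec (Nat.max a c - Nat.min a c) x),
    (Nat.leb_spec x (Nat.max a c - Nat.min a c + 2 * Nat.min (Nat.min a c) (k - Nat.max a c)));
  par_case (x + a + c)%nat; par_case (x + (Nat.max a c - Nat.min a c))%nat; simpl; auto; lia.
Qed.

Lemma sin_S_pos k b : (b <= k)%nat -> 0 < sin (INR (S b) * th k).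
Proof.
  intros Hb. apply sin_gt_0.
  - apply Rmult_lt_0_compat; [apply lt_0_INR; lia|apply th_pos].
  - rewrite <- (th_N k). apply Rmult_lt_compat_r; [apply th_pos|apply lt_INR; lia].
Qed.

Lemma sv0_pos k b : (b <= k)%nat -> 0 < sv k 0 b.
Proof.
  intros Hb. unfold sv. replace (INR 1 * INR (S b) * th k) with (INR (S b) * th k) by (simpl; ring).
  apply sin_S_pos; auto.
Qed.

Lemma eigen k a c b : (a <= k)%nat -> (c <= k)%nat -> (b <= k)%nat ->
  Rsum (fun x => if fusionN k x a c then sv k x b else 0) (S k) = sv k a b * sv k c b / sv k 0 b.
Proof.
  intros Ha Hc Hb.
  set (phi := INR (S b) * th k).
  assert (Hs : 0 < sin phi) by (apply sin_S_pos; auto).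
  assert (Hsv : forall x, sv k x b = sin (INR (S x) * phi)) by (intros; unfold sv, phi; f_equal; ring).
  assert (Hsv0 : sv k 0 b = sin phi) by (rewrite Hsv; f_equal; simpl; ring).
  set (lo := (Nat.max a c - Nat.min a c)%nat).
  set (p := Nat.min (Nat.min a c) (k - Nat.max a c)).
  set (G := fun x : nat => cos (INR x * phi) / (2 * sin phi)).
  rewrite (Rsum_ext _ (fun x => if ind lo p x then G x - G (x+2)%nat else 0)).
  2:{ intros x _. rewrite fusion_ind by auto. fold lo p. destruct (ind lo p x); [|reflexivity].
      unfold G. rewrite Hsv. apply (Rmult_eq_reg_l (2 * sin phi)); [|lra].
      field_simplify; [|lra]. 
      replace (2 * sin phi * sin (INR (S x) * phi)) with (2 * (sin (INR (S x) * phi) * sin phi)) by ring.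
      rewrite sin_sin. rewrite plus_INR, S_INR. simpl (INR 2).
      replace ((INR x + 1) * phi - phi) with (INR x * phi) by ring.
      replace ((INR x + 1) * phi + phi) with ((INR x + (1+1)) * phi) by ring. field. }
  rewrite step_tel by (unfold lo, p; lia).
  rewrite Hsv0, !Hsv. unfold G.
  assert (E1 : cos (INR lo * phi) = cos ((INR (S a) - INR (S c)) * phi)).
  { unfold lo. destruct (le_lt_dec c a).
    - rewrite Nat.max_l, Nat.min_r by lia. rewrite minus_INR by lia. rewrite !S_INR. f_equal. ring.
    - rewrite Nat.max_r, Nat.min_l by lia. rewrite minus_INR by lia. rewrite <- cos_neg. rewrite !S_INR. f_equal. ring. }
  assert (E2 : cos (INR (lo + 2 * p + 2) * phi) = cos ((INR (S a) + INR (S c)) * phi)).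
  { destruct (le_lt_dec (a + c) (2*k - (a+c))).
    - replace (lo + 2*p + 2)%nat with (a + c + 2)%nat by (unfold lo, p; lia).
      f_equal. inr. ring.
    - replace (lo + 2*p + 2)%nat with (2 * (k+2) - (a + c + 2))%nat by (unfold lo, p; lia).
      rewrite minus_INR by lia. rewrite mult_INR.
      replace ((INR 2 * INR (k + 2) - INR (a + c + 2)) * phi) with
         (INR (2 * S b) * PI - INR (a + c + 2) * phi).
      + rewrite cos_mPI_minus, pow_m1_even, Rmult_1_l. f_equal. inr. ring.
      + unfold phi. rewrite <- (th_N k). rewrite mult_INR. ring. }
  rewrite E1, E2. unfold Rdiv at 3.
  replace (sin (INR (S a) * phi) * sin (INR (S c) * phi)) with
    ((cos (INR (S a) * phi - INR (S c) * phi) - cos (INR (S a) * phi + INR (S c) * phi)) / 2)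
    by (rewrite sin_sin; reflexivity).
  replace (INR (S a) * phi - INR (S c) * phi) with ((INR (S a) - INR (S c)) * phi) by ring.
  replace (INR (S a) * phi + INR (S c) * phi) with ((INR (S a) + INR (S c)) * phi) by ring.
  field. lra.
Qed.

Definition lam k jj b := sv k jj b / sv k 0 b.
Definition W k jj a c n := (2 / INR (k+2)) * Rsum (fun b => sv k a b * sv k c b * lam k jj b ^ n) (S k).

Lemma Rsum_mult f g n m : Rsum f n * Rsum g m = Rsum (fun i => Rsum (fun j => f i * g j) m) n.
Proof.
  induction n as [|n IH].
  - rewrite Rsum_0, Rmult_0_l. symmetry. rewrite Rsum_0. reflexivity.
  - rewrite !Rsum_S, Rmult_plus_distr_r, IH, Rsum_scal. reflexivity.
Qed.

Lemma fusion_sym12 k a b c : fusionN k a b c = fusionN k b a c.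
Proof.
  unfold fusionN. rewrite (Nat.max_comm a b), (Nat.min_comm a b), (Nat.add_comm a b).
  destruct (Nat.leb a k), (Nat.leb b k); simpl; rewrite ?Bool.andb_true_r, ?Bool.andb_false_r; auto.
Qed.

Lemma N2_pos k : 0 < INR (k+2).
Proof. apply lt_0_INR; lia. Qed.

Lemma fusion_W_sum k jj a c n : (jj <= k)%nat -> (a <= k)%nat -> (c <= k)%nat ->
  Rsum (fun x => if fusionN k x a c then W k jj 0 x n else 0) (S k) =
  (2 / INR (k+2)) * Rsum (fun b => sv k a b * sv k c b * lam k jj b ^ n) (S k).
Proof.
  intros Hjj Ha Hc.
  rewrite (Rsum_ext _ (fun x => (2 / INR (k+2)) *
     Rsum (fun b => sv k 0 b * lam k jj b ^ n * (if fusionN k x a c then sv k x b else 0)) (S k))).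
  2:{ intros x Hx. unfold W. destruct (fusionN k x a c).
      - f_equal. apply Rsum_ext. intros. ring.
      - rewrite (Rsum_ext _ (fun _ => 0)) by (intros; ring). rewrite Rsum_const0. ring. }
  rewrite Rsum_scal. f_equal. rewrite Rsum_swap. apply Rsum_ext. intros b Hb.
  rewrite Rsum_scal. rewrite eigen by lia.
  assert (0 < sv k 0 b) by (apply sv0_pos; lia).
  field. lra.
Qed.

Lemma Dpaths_W k jj n c : (jj <= k)%nat -> (c <= k)%nat ->
  INR (Dpaths k jj n c) = W k jj 0 c n.
Proof.
  intros Hjj. revert c. induction n as [|n IH]; intros c Hc.
  - unfold W. simpl Dpaths.
    rewrite (Rsum_ext _ (fun b => sv k 0 b * sv k c b)) by (intros; simpl; ring).
    rewrite ortho by lia. destruct c; simpl; [|field; apply Rgt_not_eq, N2_pos].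
    field. apply Rgt_not_eq, N2_pos.
  - simpl Dpaths. rewrite INR_natsum.
    rewrite (Rsum_ext _ (fun x => if fusionN k x jj c then W k jj 0 x n else 0)).
    2:{ intros x Hx. destruct (fusionN k x jj c); [apply IH; lia|reflexivity]. }
    rewrite fusion_W_sum by lia. unfold W. f_equal. apply Rsum_ext. intros b Hb.
    unfold lam. simpl. assert (0 < sv k 0 b) by (apply sv0_pos; lia). field. lra.
Qed.

Lemma nalpha_W k jj JJ LB al : (jj <= k)%nat -> (JJ <= k)%nat -> (al <= k)%nat ->
  INR (n_alpha k jj JJ LB al) = W k jj al JJ LB.
Proof.
  intros Hjj HJ Hal. unfold n_alpha. rewrite INR_natsum.
  rewrite (Rsum_ext _ (fun x => if fusionN k x al JJ then W k jj 0 x LB else 0)).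
  2:{ intros x Hx. rewrite fusion_sym12. destruct (fusionN k x al JJ); [apply Dpaths_W; lia|reflexivity]. }
  rewrite fusion_W_sum by lia. reflexivity.
Qed.

Lemma W_split k jj JJ LA LB : (JJ <= k)%nat ->
  Rsum (fun al => W k jj 0 al LA * W k jj al JJ LB) (S k) = W k jj 0 JJ (LA + LB).
Proof.
  intros HJ. unfold W.
  set (c := 2 / INR (k+2)).
  rewrite (Rsum_ext _ (fun al => c * c * Rsum (fun b => Rsum (fun b' =>
      (sv k 0 b * lam k jj b ^ LA * (sv k JJ b' * lam k jj b' ^ LB)) * (sv k b al * sv k b' al)) (S k)) (S k))).
  2:{ intros al Hal. rewrite <- Rmult_assoc.
      replace (c * Rsum (fun b => sv k 0 b * sv k al b * lam k jj b ^ LA) (S k) * c *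
        Rsum (fun b => sv k al b * sv k JJ b * lam k jj b ^ LB) (S k)) with
        (c * c * (Rsum (fun b => sv k 0 b * sv k al b * lam k jj b ^ LA) (S k) *
        Rsum (fun b => sv k al b * sv k JJ b * lam k jj b ^ LB) (S k))) by ring.
      f_equal. rewrite Rsum_mult. apply Rsum_ext. intros b _. apply Rsum_ext. intros b' _.
      rewrite (sv_sym k al b), (sv_sym k al b'). ring. }
  rewrite Rsum_scal. 
  rewrite Rsum_swap.
  rewrite (Rsum_ext _ (fun b => Rsum (fun b' => (sv k 0 b * lam k jj b ^ LA * (sv k JJ b' * lam k jj b' ^ LB)) *
        (if Nat.eqb b b' then INR (k+2)/2 else 0)) (S k))).
  2:{ intros b Hb. rewrite Rsum_swap. apply Rsum_ext. intros b' Hb'.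
      rewrite Rsum_scal. rewrite ortho by lia. reflexivity. }
  rewrite (Rsum_ext _ (fun b => sv k 0 b * lam k jj b ^ LA * (sv k JJ b * lam k jj b ^ LB) * (INR (k+2)/2))).
  2:{ intros b Hb. rewrite (Rsum_ext _ (fun b' => if Nat.eqb b' b then
           sv k 0 b * lam k jj b ^ LA * (sv k JJ b' * lam k jj b' ^ LB) * (INR (k + 2) / 2) else 0)).
      - rewrite Rsum_delta by lia. reflexivity.
      - intros b' _. destruct (Nat.eqb_spec b b'), (Nat.eqb_spec b' b); subst; try lia; ring. }
  rewrite <- Rsum_scal. unfold c.
  rewrite <- Rsum_scal. apply Rsum_ext. intros b _. rewrite pow_add.
  field. apply Rgt_not_eq, N2_pos.
Qed.


Lemma PI_ub35 : PI <= 7/2.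
Proof. destruct (PI_ineq 1) as [_ H]. unfold tg_alt, PI_tg in H. simpl in H. lra. Qed.

Lemma Rsum_lt f g n j : (j < n)%nat -> (forall i, (i < n)%nat -> f i <= g i) -> f j < g j ->
  Rsum f n < Rsum g n.
Proof.
  intros Hj H Hlt.
  assert (E : Rsum f n = Rsum g n - Rsum (fun i => g i - f i) n) by (rewrite Rsum_minus; ring).
  assert (g j - f j <= Rsum (fun i => g i - f i) n).
  { apply (Rsum_ge_term (fun i => g i - f i)); auto. intros i Hi. specialize (H i Hi). lra. }
  lra.
Qed.

Definition Csum (n : nat) (psi : R) := Rsum (fun i => cos ((INR n - 1 - 2 * INR i) * psi)) n.

Lemma Csum_tel c psi n :
  Rsum (fun i => 2 * sin psi * cos ((c - 2 * INR i) * psi)) n =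
  sin ((c + 1) * psi) - sin ((c + 1 - 2 * INR n) * psi).
Proof.
  induction n as [|n IH].
  - rewrite Rsum_0. simpl. replace (c + 1 - 2 * 0) with (c+1) by ring. ring.
  - rewrite Rsum_S, IH, sin_cos2. rewrite S_INR.
    replace ((c - 2 * INR n) * psi + psi) with ((c + 1 - 2 * INR n) * psi) by ring.
    replace ((c - 2 * INR n) * psi - psi) with ((c + 1 - 2 * (INR n + 1)) * psi) by ring.
    ring.
Qed.

Lemma Csum_sin n psi : sin psi * Csum n psi = sin (INR n * psi).
Proof.
  unfold Csum. pose proof (Csum_tel (INR n - 1) psi n) as T.
  rewrite Rsum_scal in T.
  replace ((INR n - 1 + 1 - 2 * INR n) * psi) with (- (INR n * psi)) in T by ring.
  replace ((INR n - 1 + 1) * psi) with (INR n * psi) in T by ring.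
  rewrite sin_neg in T. lra.
Qed.

Lemma small_case th0 n m : 0 < th0 -> (2 <= n)%nat -> (2 <= m)%nat ->
  INR (n * m) * th0 <= PI ->
  0 <= sin (INR (n*m) * th0) /\ sin (INR (n*m) * th0) * sin th0 < sin (INR n * th0) * sin (INR m * th0).
Proof.
  intros Hth Hn Hm Hnm.
  assert (Hn' : 2 <= INR n) by (apply (le_INR 2); lia).
  assert (Hm' : 2 <= INR m) by (apply (le_INR 2); lia).
  rewrite mult_INR in *.
  assert (Hmt0 : 0 < INR m * th0) by (apply Rmult_lt_0_compat; lra).
  assert (Hmth : 2 * (INR m * th0) <= PI) by (assert (0 <= (INR n - 2) * (INR m * th0)) by (apply Rmult_le_pos; lra); nra).
  assert (Hth0 : 2 * th0 <= INR m * th0) by nra.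
  assert (Hnn : INR m * th0 <= INR n * INR m * th0) by nra.
  split.
  { apply sin_ge_0; nra. }
  assert (Ss : 0 < sin th0) by (apply sin_gt_0; lra).
  assert (Sm : 0 < sin (INR m * th0)) by (apply sin_gt_0; nra).
  rewrite <- (Csum_sin n th0).
  replace (INR n * INR m * th0) with (INR n * (INR m * th0)) by ring.
  rewrite <- (Csum_sin n (INR m * th0)).
  assert (Csum n (INR m * th0) < Csum n th0).
  { unfold Csum. apply (Rsum_lt _ _ _ 0%nat); [lia| |].
    - intros i Hi. assert (Hi' : INR i <= INR n - 1) by (assert (INR (S i) <= INR n) by (apply le_INR; lia); rewrite S_INR in *; lra).
      assert (0 <= INR i) by apply pos_INR.
      set (s := INR n - 1 - 2 * INR i).
      assert (Hs : Rabs s <= INR n - 1) by (unfold s; apply Rabs_le; lra).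
      assert (0 <= Rabs s) by apply Rabs_pos.
      replace (cos (s * (INR m * th0))) with (cos (Rabs s * (INR m * th0))).
      2:{ unfold Rabs; destruct (Rcase_abs s); [|reflexivity]. rewrite <- cos_neg. f_equal. ring. }
      replace (cos (s * th0)) with (cos (Rabs s * th0)).
      2:{ unfold Rabs; destruct (Rcase_abs s); [|reflexivity]. rewrite <- cos_neg. f_equal. ring. }
      apply cos_decr_1; nra.
    - simpl INR. replace (INR n - 1 - 2 * 0) with (INR n - 1) by ring.
      apply cos_decreasing_1; nra. }
  assert (0 < sin th0 * sin (INR m * th0)) by (apply Rmult_lt_0_compat; lra).
  nra.
Qed.

Section Conc.
Variable t : R.
Hypothesis tpos : 0 < t.
Let s (i : nat) := sin (INR i * t).

Lemma s_nonneg i : INR i * t <= PI -> 0 <= s i.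
Proof. intros. unfold s. apply sin_ge_0; [|lra]. apply Rmult_le_pos; [apply pos_INR|lra]. Qed.

Lemma s_conc i : INR (S i) * t <= PI -> s (S (S i)) + s i <= 2 * s (S i).
Proof.
  intros H. unfold s.
  replace (INR (S (S i)) * t) with (INR (S i) * t + t) by (inr; ring).
  replace (INR i * t) with (INR (S i) * t - t) by (inr; ring).
  rewrite sin_plus, sin_minus.
  assert (0 <= sin (INR (S i) * t)) by (apply (s_nonneg (S i)); auto).
  assert (cos t <= 1) by apply COS_bound.
  nra.
Qed.

Lemma s_P i : INR i * t <= PI -> INR i * (s (S i) - s i) <= s i.
Proof.
  induction i as [|i IH]; intros H.
  - unfold s. simpl INR. rewrite !Rmult_0_l, sin_0. lra.
  - assert (Hi : INR i * t <= PI) by (rewrite S_INR in H; lra).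
    specialize (IH Hi). pose proof (s_conc i H).
    assert (0 <= INR i) by apply pos_INR.
    assert (s (S (S i)) - s (S i) <= s (S i) - s i) by lra.
    rewrite S_INR. nra.
Qed.

Lemma s_C i d : INR (i + d) * t <= PI -> INR (i + d) * s i >= INR i * s (i + d).
Proof.
  induction d as [|d IH]; intros H.
  - rewrite Nat.add_0_r. lra.
  - assert (H' : INR (i + d) * t <= PI) by (rewrite Nat.add_succ_r, S_INR in H; nra).
    specialize (IH H').
    pose proof (s_P (i + d) H') as HP.
    rewrite Nat.add_succ_r.
    assert (0 <= s i) by (apply s_nonneg; assert (INR i <= INR (i+d)) by (apply le_INR; lia); nra).
    assert (0 <= INR i) by apply pos_INR.
    destruct (Nat.eq_dec (i + d) 0) as [E|E].
    + assert (i = 0%nat) by lia. subst i.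
      assert (Hs0 : s 0 = 0) by (unfold s; simpl INR; rewrite Rmult_0_l; apply sin_0).
      rewrite Hs0. simpl (INR 0). lra.
    + assert (1 <= INR (i + d)) by (apply (le_INR 1); lia).
      rewrite S_INR.
      assert (INR (i+d) * ((INR (i+d) + 1) * s i) >= INR (i+d) * (INR i * s (S (i + d)))); [|nra].
      assert (INR (i + d) * s (S (i + d)) <= (INR (i+d) + 1) * s (i + d)) by lra.
      nra.
Qed.
End Conc.

Lemma sin_reflect N n t : INR N * t = PI -> (n <= N)%nat -> sin (INR (N - n) * t) = sin (INR n * t).
Proof.
  intros HN Hn. rewrite minus_INR by auto.
  replace ((INR N - INR n) * t) with (PI - INR n * t) by lra. apply sin_PI_x.
Qed.

Lemma sin_reflect_m N n m t : INR N * t = PI -> (n <= N)%nat ->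
  Rabs (sin (INR ((N - n) * m) * t)) = Rabs (sin (INR (n * m) * t)).
Proof.
  intros HN Hn. rewrite !mult_INR, minus_INR by auto.
  replace ((INR N - INR n) * INR m * t) with (INR m * PI - INR n * INR m * t) by (rewrite <- HN; ring).
  rewrite sin_mPI_minus. rewrite Rabs_mult, Rabs_Ropp, pow_1_abs. ring.
Qed.

Lemma large_case N n m : (2 * n <= N)%nat -> (2 * m <= N)%nat -> (N < n * m)%nat -> (2 <= n)%nat -> (2<=m)%nat ->
  sin (PI / INR N) < sin (INR n * (PI / INR N)) * sin (INR m * (PI / INR N)).
Proof.
  intros Hn Hm Hnm Hn2 Hm2.
  assert (H6 : (6 <= N)%nat) by nia.
  set (t := PI / INR N).
  assert (HN : 6 <= INR N) by (replace 6 with (INR 6) by (simpl; lra); apply le_INR; lia).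
  assert (HNt : INR N * t = PI) by (unfold t; field; lra).
  pose proof PI_RGT_0 as Hpi. pose proof PI_ub35 as Hpi2.
  assert (tpos : 0 < t) by (unfold t; apply Rdiv_lt_0_compat; lra).
  assert (t6 : t <= PI / 6) by (unfold t; apply Rmult_le_compat_l; [lra|]; apply Rinv_le_contravar; lra).
  set (M := Nat.div2 N).
  assert (HM : (N = 2 * M \/ N = 2 * M + 1)%nat).
  { unfold M. destruct (Nat.Even_or_Odd N) as [He|Ho].
    - left. rewrite (Nat.Even_double N) at 1 by auto. unfold Nat.double. lia.
    - right. rewrite (Nat.Odd_double N) at 1 by auto. unfold Nat.double. lia. }
  assert (HMt : INR M * t <= PI / 2 /\ PI / 2 - t / 2 <= INR M * t).
  { destruct HM as [E|E]; rewrite E in HNt; rewrite ?plus_INR, ?mult_INR, ?S_INR, ?INR_0 in HNt; split; nra. }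
  assert (HM1 : 1 <= INR M) by (apply (le_INR 1); lia).
  assert (sMlb : cos (t/2) <= sin (INR M * t)).
  { rewrite <- sin_shift. apply sin_incr_1; lra. }
  assert (HcPI : sqrt 3 / 2 <= cos t).
  { rewrite <- cos_PI6. apply cos_decr_1; lra. }
  assert (Hs3 : 17/10 <= sqrt 3).
  { pose proof (sqrt_pos 3). pose proof (sqrt_sqrt 3). nra. }
  assert (Hc2 : cos (t/2) * cos (t/2) = (1 + cos t)/2).
  { replace t with (2 * (t/2)) at 3 by field. rewrite cos_2a_cos. field. }
  assert (Hcpos : 0 < cos (t/2)) by (apply cos_gt_0; lra).
  assert (Lb : forall i, (2 * i <= N)%nat -> INR M * sin (INR i * t) >= INR i * sin (INR M * t)).
  { intros i Hi. assert (i <= M)%nat by lia.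
    replace M with (i + (M - i))%nat by lia. apply s_C; auto.
    replace (i + (M - i))%nat with M by lia. lra. }
  pose proof (Lb n Hn) as Ln. pose proof (Lb m Hm) as Lm.
  assert (HMN : 2 * INR M <= INR N) by (destruct HM as [E|E]; rewrite E; inr; simpl; lra).
  assert (Hnm' : INR N + 1 <= INR n * INR m) by (rewrite <- mult_INR; apply (le_INR (S N)) in Hnm; rewrite S_INR in Hnm; lra).
  assert (sin t < t) by (apply sin_lt_x; lra).
  assert (0 <= sin (INR n * t)) by (apply sin_ge_0; [apply Rmult_le_pos; [apply pos_INR|lra]|];
     assert (2 * INR n <= INR N) by (rewrite <- (mult_INR 2); apply le_INR; lia); nra).
  assert (0 <= sin (INR m * t)) by (apply sin_ge_0; [apply Rmult_le_pos; [apply pos_INR|lra]|];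
     assert (2 * INR m <= INR N) by (rewrite <- (mult_INR 2); apply le_INR; lia); nra).
  (* M^2 s_n s_m >= n m s_M^2 >= nm cos^2 *)
  assert (P1 : INR M * INR M * (sin (INR n * t) * sin (INR m * t)) >= INR n * INR m * (cos (t/2) * cos (t/2))).
  { assert (0 <= INR n) by apply pos_INR. assert (0 <= INR m) by apply pos_INR.
    assert (INR M * sin (INR n * t) * (INR M * sin (INR m * t)) >= INR n * sin (INR M * t) * (INR m * sin (INR M * t))).
    { apply Rle_ge. apply Rmult_le_compat; try nra. }
    assert (sin (INR M * t) * sin (INR M * t) >= cos (t/2) * cos (t/2)) by nra.
    nra. }
  assert (P2 : INR N * INR N * (sin (INR n * t) * sin (INR m * t)) >= 2 * (INR N + 1) * (1 + cos t)).
  { assert (0 <= sin (INR n * t) * sin (INR m * t)) by nra.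
    assert (INR M * INR M * 4 <= INR N * INR N) by nra. nra. }
  assert (2 * (1 + cos t) >= PI) by nra.
  assert (INR N * INR N * (sin (INR n * t) * sin (INR m * t)) > INR N * PI) by nra.
  assert (sin (INR n * t) * sin (INR m * t) > t) by (rewrite <- HNt in *; nra).
  lra.
Qed.

Lemma Rabs_le_inv x a : Rabs x <= a -> - a <= x <= a.
Proof. unfold Rabs. destruct (Rcase_abs x); intros; split; lra. Qed.

Lemma key_ineq N n m : (2 <= n)%nat -> (n + 2 <= N)%nat -> (2 <= m)%nat -> (m + 2 <= N)%nat ->
  Rabs (sin (INR n * INR m * (PI / INR N))) * sin (PI / INR N) <
  sin (INR n * (PI / INR N)) * sin (INR m * (PI / INR N)).
Proof.
  intros Hn1 Hn2 Hm1 Hm2.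
  set (t := PI / INR N).
  assert (HN : 0 < INR N) by (apply lt_0_INR; lia).
  assert (HNt : INR N * t = PI) by (unfold t; field; lra).
  pose proof PI_RGT_0.
  assert (tpos : 0 < t) by (unfold t; apply Rdiv_lt_0_compat; lra).
  assert (Hst : 0 < sin t).
  { apply sin_gt_0; auto. assert (2 <= INR N) by (apply (le_INR 2); lia). unfold t.
    apply (Rmult_lt_reg_r (INR N)); [lra|]. unfold Rdiv. rewrite Rmult_assoc, Rinv_l by lra. nra. }
  set (n' := if Nat.leb (2*n) N then n else (N - n)%nat).
  set (m' := if Nat.leb (2*m) N then m else (N - m)%nat).
  assert (Hn' : sin (INR n' * t) = sin (INR n * t) /\ (2 <= n')%nat /\ (2 * n' <= N)%nat).
  { unfold n'. destruct (Nat.leb_spec (2*n) N).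
    - repeat split; auto.
    - rewrite sin_reflect by (auto; lia). repeat split; lia. }
  assert (Hm' : sin (INR m' * t) = sin (INR m * t) /\ (2 <= m')%nat /\ (2 * m' <= N)%nat).
  { unfold m'. destruct (Nat.leb_spec (2*m) N).
    - repeat split; auto.
    - rewrite sin_reflect by (auto; lia). repeat split; lia. }
  assert (Hnm : Rabs (sin (INR (n' * m') * t)) = Rabs (sin (INR n * INR m * t))).
  { rewrite <- mult_INR.
    assert (E1 : Rabs (sin (INR (n' * m') * t)) = Rabs (sin (INR (n * m') * t))).
    { unfold n'. destruct (Nat.leb_spec (2*n) N); [reflexivity|]. apply sin_reflect_m; auto; lia. }
    rewrite E1, (Nat.mul_comm n m'), (Nat.mul_comm n m).
    unfold m'. destruct (Nat.leb_spec (2*m) N); [reflexivity|]. apply sin_reflect_m; auto; lia. }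
  destruct Hn' as [Sn [Hn'1 Hn'2]]. destruct Hm' as [Sm [Hm'1 Hm'2]].
  rewrite <- Hnm, <- Sn, <- Sm.
  destruct (le_lt_dec (n' * m') N) as [Hs|Hl].
  - destruct (small_case t n' m') as [P Q]; auto.
    + rewrite <- HNt. apply Rmult_le_compat_r; [lra|]. apply le_INR; auto.
    + rewrite Rabs_right by lra. exact Q.
  - pose proof (large_case N n' m' Hn'2 Hm'2 Hl Hn'1 Hm'1) as L. fold t in L.
    assert (Rabs (sin (INR (n' * m') * t)) <= 1) by (apply Rabs_le; apply SIN_bound).
    nra.
Qed.

Lemma sin_mono_half N i : (1 <= i)%nat -> (2 * i <= N)%nat ->
  sin (PI / INR N) <= sin (INR i * (PI / INR N)) /\
  ((2 <= i)%nat -> sin (PI / INR N) < sin (INR i * (PI / INR N))).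
Proof.
  intros H1 H2.
  assert (HN : 0 < INR N) by (apply lt_0_INR; lia).
  pose proof PI_RGT_0.
  set (t := PI / INR N).
  assert (tpos : 0 < t) by (unfold t; apply Rdiv_lt_0_compat; lra).
  assert (Hi : 2 * INR i <= INR N) by (rewrite <- (mult_INR 2); apply le_INR; auto).
  assert (Hit : INR i * t <= PI / 2).
  { unfold t. apply (Rmult_le_reg_r (2 * INR N)); [lra|].
    replace (INR i * (PI / INR N) * (2 * INR N)) with (2 * INR i * PI) by (field; lra). nra. }
  assert (Hi1 : 1 <= INR i) by (apply (le_INR 1); auto).
  split.
  - apply sin_incr_1; nra.
  - intros H3. assert (2 <= INR i) by (apply (le_INR 2); auto). apply sin_increasing_1; nra.
Qed.

Lemma sin_mono N i : (1 <= i)%nat -> (i + 1 <= N)%nat ->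
  sin (PI / INR N) <= sin (INR i * (PI / INR N)) /\
  ((2 <= i)%nat -> (i + 2 <= N)%nat -> sin (PI / INR N) < sin (INR i * (PI / INR N))).
Proof.
  intros H1 H2.
  assert (HN : 0 < INR N) by (apply lt_0_INR; lia).
  destruct (le_lt_dec (2 * i) N) as [Hh|Hh].
  - destruct (sin_mono_half N i H1 Hh) as [A B]. split; auto.
  - assert (HNt : INR N * (PI / INR N) = PI) by (field; lra).
    rewrite <- (sin_reflect N i (PI / INR N) HNt) by lia.
    destruct (sin_mono_half N (N - i)) as [A B]; try lia. split; auto.
    intros. apply B. lia.
Qed.

Lemma sv_a0 k a : sv k a 0 = sin (INR (S a) * th k).
Proof. unfold sv. f_equal. simpl (INR 1). ring. Qed.

Lemma sv_0b k b : sv k 0 b = sin (INR (S b) * th k).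
Proof. unfold sv. f_equal. simpl (INR 1). ring. Qed.

Lemma sv00 k : sv k 0 0 = sin (th k).
Proof. rewrite sv_a0. f_equal. simpl. ring. Qed.

Lemma sv00_pos k : 0 < sv k 0 0.
Proof. apply sv0_pos. lia. Qed.

Lemma sv_a0_ge k a : (a <= k)%nat -> sv k 0 0 <= sv k a 0.
Proof.
  intros Ha. rewrite sv00, sv_a0. unfold th. apply sin_mono; lia.
Qed.

Lemma sv_a0_gt k a : (1 <= a)%nat -> (a + 1 <= k)%nat -> sv k 0 0 < sv k a 0.
Proof.
  intros Ha1 Ha2. rewrite sv00, sv_a0. unfold th. apply sin_mono; lia.
Qed.

Lemma sv_le1 k a b : Rabs (sv k a b) <= 1.
Proof. unfold sv. apply Rabs_le. apply SIN_bound. Qed.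

Lemma qdim_sv k a : qdim k a = sv k a 0 / sv k 0 0.
Proof.
  unfold qdim. rewrite sv00, sv_a0. unfold th. rewrite Nat.add_1_r.
  f_equal. f_equal. unfold Rdiv. ring.
Qed.

Lemma lam0 k jj : lam k jj 0 = qdim k jj.
Proof. unfold lam. rewrite qdim_sv. reflexivity. Qed.

Lemma qdim_ge1 k a : (a <= k)%nat -> 1 <= qdim k a.
Proof.
  intros Ha. rewrite qdim_sv. pose proof (sv00_pos k). pose proof (sv_a0_ge k a Ha).
  apply (Rmult_le_reg_r (sv k 0 0)); auto. unfold Rdiv. rewrite Rmult_assoc, Rinv_l by lra. lra.
Qed.

Lemma qdim_gt1 k a : (1 <= a)%nat -> (a + 1 <= k)%nat -> 1 < qdim k a.
Proof.
  intros Ha1 Ha2. rewrite qdim_sv. pose proof (sv00_pos k). pose proof (sv_a0_gt k a Ha1 Ha2).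
  apply (Rmult_lt_reg_r (sv k 0 0)); auto. unfold Rdiv. rewrite Rmult_assoc, Rinv_l by lra. lra.
Qed.

Lemma qdim_le k a : qdim k a <= / sv k 0 0.
Proof.
  rewrite qdim_sv. pose proof (sv00_pos k). pose proof (sv_le1 k a 0).
  apply Rabs_le_inv in H0. unfold Rdiv. rewrite <- (Rmult_1_l (/ sv k 0 0)) at 2.
  apply Rmult_le_compat_r; [left; apply Rinv_0_lt_compat; auto|lra].
Qed.

Lemma sv_ck k c : sv k c k = (-1)^c * sv k c 0.
Proof.
  rewrite sv_a0. unfold sv.
  replace (INR (S c) * INR (S k) * th k) with (INR (S c) * PI - INR (S c) * th k).
  - rewrite sin_mPI_minus. simpl. ring.
  - rewrite <- (th_N k). rewrite !S_INR, !plus_INR. simpl (INR 2). ring.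
Qed.

Lemma lam_k k jj : lam k jj k = (-1)^jj * lam k jj 0.
Proof.
  unfold lam. rewrite !sv_ck. simpl (_ ^ 0). pose proof (sv00_pos k). field. lra.
Qed.

Lemma lam_lt k jj b : (1 <= jj)%nat -> (jj + 1 <= k)%nat -> (1 <= b)%nat -> (b + 1 <= k)%nat ->
  Rabs (lam k jj b) < lam k jj 0.
Proof.
  intros H1 H2 H3 H4.
  pose proof (key_ineq (k+2) (S jj) (S b)) as K.
  assert (P0 : 0 < sv k 0 b) by (apply sv0_pos; lia).
  pose proof (sv00_pos k) as P00.
  unfold lam. rewrite sv00 in *. rewrite sv_a0, sv_0b in *.
  unfold sv. fold (th k) in K.
  unfold Rdiv at 1. rewrite Rabs_mult, Rabs_inv, (Rabs_right (sin (INR (S b) * th k))) by lra.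
  assert (Kx : Rabs (sin (INR (S jj) * INR (S b) * th k)) * sin (th k) <
        sin (INR (S jj) * th k) * sin (INR (S b) * th k)) by (apply K; lia).
  apply (Rmult_lt_reg_r (sin (INR (S b) * th k) * sin (th k))); [nra|].
  replace (Rabs (sin (INR (S jj) * INR (S b) * th k)) * / sin (INR (S b) * th k) *
    (sin (INR (S b) * th k) * sin (th k))) with (Rabs (sin (INR (S jj) * INR (S b) * th k)) * sin (th k)) by (field; lra).
  replace (sin (INR (S jj) * th k) / sin (th k) * (sin (INR (S b) * th k) * sin (th k))) with
    (sin (INR (S jj) * th k) * sin (INR (S b) * th k)) by (field; lra).
  exact Kx.
Qed.

Definition midind k b := orb (Nat.eqb b 0) (Nat.eqb b k).

Definition Eb k jj n := (2 / INR (k+2)) *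
  Rsum (fun b => if midind k b then 0 else Rabs (lam k jj b / lam k jj 0) ^ n) (S k).

Lemma pow_m1_abs n : Rabs ((-1)^n) = 1.
Proof. induction n; simpl; [apply Rabs_R1|]. rewrite Rabs_mult, IHn. unfold Rabs at 1; destruct (Rcase_abs (-1)); lra. Qed.

Lemma pow_m1_sq n : (-1)^n * (-1)^n = 1.
Proof. rewrite <- Rpow_mult_distr. replace (-1 * -1) with 1 by ring. apply pow1. Qed.

Lemma W_decomp k jj a c n : (1 <= k)%nat -> 0 < lam k jj 0 ->
  exists e, W k jj a c n = lam k jj 0 ^ n *
     ((2 / INR (k+2)) * sv k a 0 * sv k c 0 * (1 + (-1)^a * (-1)^c * (-1)^(jj*n)) + e)
   /\ Rabs e <= Eb k jj n.
Proof.
  intros Hk Hd. set (d := lam k jj 0).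
  set (F := fun b => sv k a b * sv k c b * lam k jj b ^ n).
  set (e := (2 / INR (k+2)) * Rsum (fun b => if midind k b then 0 else sv k a b * sv k c b * (lam k jj b / d) ^ n) (S k)).
  exists e. split.
  - unfold W. fold F.
    rewrite (Rsum_ext F (fun b => (if Nat.eqb b 0 then F b else 0) + (if Nat.eqb b k then F b else 0) +
        (if midind k b then 0 else F b))).
    2:{ intros b Hb. unfold midind. destruct (Nat.eqb_spec b 0), (Nat.eqb_spec b k); simpl; try lia; ring. }
    rewrite !Rsum_plus, !Rsum_delta by lia.
    unfold F. rewrite lam_k, !sv_ck. fold d.
    unfold e. rewrite (Rsum_ext (fun b => if midind k b then 0 else sv k a b * sv k c b * lam k jj b ^ n)
       (fun b => d ^ n * (if midind k b then 0 else sv k a b * sv k c b * (lam k jj b / d) ^ n))).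
    2:{ intros b _. destruct (midind k b); [ring|]. unfold Rdiv. rewrite Rpow_mult_distr, pow_inv. field. apply pow_nonzero. unfold d in *. lra. }
    rewrite Rsum_scal. rewrite Rpow_mult_distr, pow_mult. ring.
  - unfold e, Eb. rewrite Rabs_mult. rewrite (Rabs_right (2 / INR (k+2))).
    2:{ left. apply Rdiv_lt_0_compat; [lra|apply N2_pos]. }
    apply Rmult_le_compat_l; [left; apply Rdiv_lt_0_compat; [lra|apply N2_pos]|].
    eapply Rle_trans; [apply Rsum_abs_le|]. apply Rsum_le. intros b _.
    destruct (midind k b); [rewrite Rabs_R0; lra|].
    rewrite !Rabs_mult. rewrite <- RPow_abs.
    pose proof (sv_le1 k a b). pose proof (sv_le1 k c b).
    assert (0 <= Rabs (lam k jj b / d) ^ n) by (apply pow_le, Rabs_pos).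
    assert (0 <= Rabs (sv k a b)) by apply Rabs_pos. assert (0 <= Rabs (sv k c b)) by apply Rabs_pos.
    change (lam k jj 0) with d.
    assert (Rabs (sv k a b) * Rabs (sv k c b) <= 1) by nra. nra.
Qed.

Lemma sum_to0 (g : nat -> nat -> R) m :
  (forall b, (b < m)%nat -> forall del, 0 < del -> exists N, forall n, (N <= n)%nat -> Rabs (g b n) <= del) ->
  forall del, 0 < del -> exists N, forall n, (N <= n)%nat -> Rabs (Rsum (fun b => g b n) m) <= del.
Proof.
  induction m as [|m IH]; intros H del Hdel.
  - exists 0%nat. intros. rewrite Rsum_0, Rabs_R0. lra.
  - destruct (IH (fun b Hb => H b (Nat.lt_lt_succ_r _ _ Hb)) (del/2)) as [N1 HN1]; [lra|].
    destruct (H m (Nat.lt_succ_diag_r m) (del/2)) as [N2 HN2]; [lra|].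
    exists (Nat.max N1 N2). intros n Hn. rewrite Rsum_S.
    eapply Rle_trans; [apply Rabs_triang|].
    assert (Rabs (Rsum (fun b => g b n) m) <= del/2) by (apply HN1; lia).
    assert (Rabs (g m n) <= del/2) by (apply HN2; lia). lra.
Qed.

Lemma Eb_to0 k jj : (1 <= jj)%nat -> (jj + 1 <= k)%nat ->
  forall del, 0 < del -> exists N, forall n, (N <= n)%nat -> Eb k jj n <= del.
Proof.
  intros H1 H2 del Hdel.
  assert (HN : 0 < 2 / INR (k+2)) by (apply Rdiv_lt_0_compat; [lra|apply N2_pos]).
  destruct (sum_to0 (fun b n => if midind k b then 0 else Rabs (lam k jj b / lam k jj 0) ^ n) (S k))
    with (del := del / (2 / INR (k+2))) as [N HN'].
  - intros b Hb e He. unfold midind. destruct (Nat.eqb_spec b 0), (Nat.eqb_spec b k); simpl.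
    1-3: exists 0%nat; intros; rewrite Rabs_R0; lra.
    assert (Hd : 0 < lam k jj 0) by (rewrite lam0; pose proof (qdim_gt1 k jj H1 H2); lra).
    assert (Hl : Rabs (lam k jj b / lam k jj 0) < 1).
    { unfold Rdiv. rewrite Rabs_mult, Rabs_inv, (Rabs_right (lam k jj 0)) by lra.
      pose proof (lam_lt k jj b H1 H2 ltac:(lia) ltac:(lia)).
      apply (Rmult_lt_reg_r (lam k jj 0)); auto. rewrite Rmult_assoc, Rinv_l by lra. lra. }
    assert (Hl' : Rabs (Rabs (lam k jj b / lam k jj 0)) < 1) by (rewrite Rabs_Rabsolu; auto).
    destruct (pow_lt_1_zero _ Hl' e He) as [N HN2]. exists N. intros nn Hnn. left. apply HN2. lia.
  - apply Rdiv_lt_0_compat; auto.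
  - exists N. intros n Hn. specialize (HN' n Hn). unfold Eb.
    apply Rabs_le_inv in HN'.
    apply (Rmult_le_reg_l (/ (2 / INR (k+2)))); [apply Rinv_0_lt_compat; auto|].
    rewrite <- Rmult_assoc, Rinv_l by lra. unfold Rdiv at 2 in HN'. lra.
Qed.

Lemma natsum_nz f m : natsum f m <> 0%nat -> exists x, (x < m)%nat /\ f x <> 0%nat.
Proof.
  induction m as [|m IH]; intros H; [unfold natsum in H; simpl in H; lia|].
  rewrite natsum_S in H. destruct (Nat.eq_dec (f m) 0) as [E|E].
  - destruct IH as [x [Hx Hf]]; [lia|]. exists x; split; auto.
  - exists m; split; auto.
Qed.

Lemma Dpaths_parity k jj n c : Dpaths k jj n c <> 0%nat -> Nat.even (c + jj * n) = true.
Proof.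
  revert c. induction n as [|n IH]; intros c H.
  - simpl in H. destruct (Nat.eqb_spec c 0); [subst; rewrite Nat.mul_0_r; reflexivity|lia].
  - simpl in H. apply natsum_nz in H. destruct H as [x [Hx Hf]].
    destruct (fusionN k x jj c) eqn:F; [|lia].
    specialize (IH x Hf). unfold fusionN in F.
    repeat (apply andb_prop in F; destruct F as [F ?]).
    apply even_true in IH. destruct IH as [q Hq].
    match goal with H : Nat.even (x + jj + c) = true |- _ => apply even_true in H; destruct H as [r Hr] end.
    apply (even_intro _ (r + q - x)). rewrite Nat.mul_succ_r. lia.
Qed.

Lemma pow_m1_even_b n : Nat.even n = true -> (-1)^n = 1.
Proof. intros H. apply even_true in H. destruct H as [q ->]. apply pow_m1_even. Qed.

Lemma ln_div' x y : 0 < x -> 0 < y -> ln (x / y) = ln x - ln y.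
Proof. intros. unfold Rdiv. rewrite ln_mult; [rewrite ln_Rinv by auto; ring|auto|apply Rinv_0_lt_compat; auto]. Qed.

Lemma ln_le_sub1 y : 0 < y -> ln y <= y - 1.
Proof.
  intros Hy. destruct (Req_dec (ln y) 0) as [E|E].
  - assert (y = 1) by (rewrite <- (exp_ln y Hy), E; apply exp_0). lra.
  - pose proof (exp_ineq1 _ E). rewrite exp_ln in H; auto. lra.
Qed.

Lemma ln_mono x y : 0 < x -> x <= y -> ln x <= ln y.
Proof. intros Hx [H|H]; [left; apply ln_increasing; auto|subst; lra]. Qed.

Lemma ln_ge0 x : 1 <= x -> 0 <= ln x.
Proof. intros. rewrite <- ln_1. apply ln_mono; lra. Qed.

Lemma harmonic_S n : harmonic (S n) = harmonic n + / INR (S n).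
Proof.
  unfold harmonic. rewrite seq_S, map_app, fold_right_app. simpl.
  rewrite fold_Rplus_acc. lra.
Qed.

Lemma harm_step i : (1 <= i)%nat ->
  / INR (S i) <= ln (INR (S i)) - ln (INR i) <= / INR i.
Proof.
  intros Hi. assert (H1 : 1 <= INR i) by (apply (le_INR 1); auto).
  rewrite S_INR. split.
  - pose proof (ln_le_sub1 (INR i / (INR i + 1))) as L.
    rewrite ln_div' in L by lra.
    assert (INR i / (INR i + 1) - 1 = - / (INR i + 1)) by (field; lra). 
    assert (0 < INR i / (INR i + 1)) by (apply Rdiv_lt_0_compat; lra). lra.
  - pose proof (ln_le_sub1 ((INR i + 1) / INR i)) as L.
    rewrite ln_div' in L by lra.
    assert ((INR i + 1) / INR i - 1 = / INR i) by (field; lra).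
    assert (0 < (INR i + 1) / INR i) by (apply Rdiv_lt_0_compat; lra). lra.
Qed.

Lemma harm_bounds M j : (1 <= M)%nat ->
  ln (INR (M + j + 1)) - ln (INR (M + 1)) <= harmonic (M + j) - harmonic M <= ln (INR (M + j)) - ln (INR M).
Proof.
  intros HM. induction j as [|j IH].
  - rewrite !Nat.add_0_r. lra.
  - replace (M + S j)%nat with (S (M + j)) by lia. rewrite harmonic_S.
    pose proof (harm_step (M + j) ltac:(lia)) as S1.
    pose proof (harm_step (S (M + j)) ltac:(lia)) as S2.
    replace (M + j + 1)%nat with (S (M + j)) in IH by lia.
    replace (S (M + j) + 1)%nat with (S (S (M + j))) by lia.
    lra.
Qed.

Lemma harm_approx M D : (1 <= M)%nat -> (M <= D)%nat ->
  Rabs (harmonic D - harmonic M - ln (INR D / INR M)) <= / INR M.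
Proof.
  intros HM HMD.
  assert (H1 : 1 <= INR M) by (apply (le_INR 1); auto).
  assert (H2 : INR M <= INR D) by (apply le_INR; auto).
  rewrite ln_div' by lra.
  replace D with (M + (D - M))%nat by lia.
  pose proof (harm_bounds M (D - M) HM) as B.
  pose proof (harm_step M HM) as S1. rewrite <- Nat.add_1_r in S1.
  assert (ln (INR (M + (D - M))) <= ln (INR (M + (D - M) + 1))).
  { apply ln_mono; [rewrite plus_INR; assert (0 <= INR (D - M)) by apply pos_INR; lra|].
    apply le_INR; lia. }
  apply Rabs_le. split; lra.
Qed.

Lemma ln_ratio P Pm u v : 0 < Pm -> Pm <= P -> Rabs u <= Pm / 2 -> Rabs v <= Pm / 2 ->
  Rabs (ln ((P + u) / (P + v))) <= 2 * (Rabs u + Rabs v) / Pm.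
Proof.
  intros HPm HP Hu Hv.
  apply Rabs_le_inv in Hu as Hu'. apply Rabs_le_inv in Hv as Hv'.
  assert (Pu : Pm / 2 <= P + u) by lra. assert (Pv : Pm / 2 <= P + v) by lra.
  assert (0 <= Rabs u) by apply Rabs_pos. assert (0 <= Rabs v) by apply Rabs_pos.
  assert (Huv : Rabs (u - v) <= Rabs u + Rabs v).
  { unfold Rminus. eapply Rle_trans; [apply Rabs_triang|]. rewrite Rabs_Ropp. lra. }
  apply Rabs_le_inv in Huv.
  apply Rabs_le. split.
  - rewrite ln_div' by lra.
    pose proof (ln_le_sub1 ((P + v) / (P + u)) ltac:(apply Rdiv_lt_0_compat; lra)) as L. rewrite ln_div' in L by lra.
    assert (E : (P + v) / (P + u) - 1 = (v - u) / (P + u)) by (field; lra).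
    assert ((v - u) / (P + u) <= 2 * (Rabs u + Rabs v) / Pm).
    { unfold Rdiv. apply (Rmult_le_reg_r (P + u)); [lra|].
      rewrite Rmult_assoc, Rinv_l by lra.
      apply (Rmult_le_reg_r Pm); [lra|].
      replace (2 * (Rabs u + Rabs v) * / Pm * (P + u) * Pm) with (2 * (Rabs u + Rabs v) * (P + u)) by (field; lra).
      nra. }
    lra.
  - rewrite ln_div' in * by lra.
    pose proof (ln_le_sub1 ((P + u) / (P + v)) ltac:(apply Rdiv_lt_0_compat; lra)) as L. rewrite ln_div' in L by lra.
    assert (E : (P + u) / (P + v) - 1 = (u - v) / (P + v)) by (field; lra).
    assert ((u - v) / (P + v) <= 2 * (Rabs u + Rabs v) / Pm).
    { unfold Rdiv. apply (Rmult_le_reg_r (P + v)); [lra|].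
      rewrite Rmult_assoc, Rinv_l by lra.
      apply (Rmult_le_reg_r Pm); [lra|].
      replace (2 * (Rabs u + Rabs v) * / Pm * (P + v) * Pm) with (2 * (Rabs u + Rabs v) * (P + v)) by (field; lra).
      nra. }
    lra.
Qed.

Lemma Rmin_close a b a0 b0 t : Rabs (a - a0) <= t -> Rabs (b - b0) <= t ->
  Rabs (Rmin a b - Rmin a0 b0) <= t.
Proof.
  intros Ha Hb. apply Rabs_le_inv in Ha. apply Rabs_le_inv in Hb.
  unfold Rmin. destruct (Rle_dec a b), (Rle_dec a0 b0); apply Rabs_le; split; lra.
Qed.

Lemma abs_frac_le x y a c : Rabs x <= a -> 0 < c -> c <= y -> Rabs (x / y) <= a / c.
Proof.
  intros Hx Hc Hy. unfold Rdiv. rewrite Rabs_mult, Rabs_inv, (Rabs_right y) by lra.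
  assert (0 <= Rabs x) by apply Rabs_pos.
  apply Rmult_le_compat; auto. left; apply Rinv_0_lt_compat; lra.
  apply Rinv_le_contravar; lra.
Qed.

Lemma Rabs_triang3 a b c : Rabs (a + b + c) <= Rabs a + Rabs b + Rabs c.
Proof.
  eapply Rle_trans; [apply Rabs_triang|]. pose proof (Rabs_triang a b). lra.
Qed.

Section Core.
Variables (d da dJ P1 P2 P3 e1 e2 e3 Pm PM del Dm : R) (m n D LA LB : nat).
Hypothesis Hd : 1 < d.
Hypothesis Hda : 1 <= da <= Dm.
Hypothesis HdJ : 1 <= dJ <= Dm.
Hypothesis HPm : 0 < Pm.
Hypothesis HP1 : Pm <= P1 <= PM.
Hypothesis HP2 : Pm <= P2 <= PM.
Hypothesis HP3 : Pm <= P3 <= PM.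
Hypothesis HP12 : P1 * dJ = P2.
Hypothesis HP32 : P3 * da = P2.
Hypothesis He1 : Rabs e1 <= del.
Hypothesis He2 : Rabs e2 <= del.
Hypothesis He3 : Rabs e3 <= del.
Hypothesis Hdel : del * Dm <= Pm / 2.
Hypothesis Hm : INR m = d ^ LA * (P1 + e1).
Hypothesis Hn : INR n = d ^ LB * (P2 + e2).
Hypothesis HD : INR D = d ^ (LA + LB) * (P3 + e3).
Hypothesis Hmn : (1 <= m)%nat /\ (1 <= n)%nat /\ (Nat.max m n <= D)%nat.

Definition phiC := harmonic D - harmonic (Nat.max m n)
  - Rmin ((INR m - 1) / (2 * INR n)) ((INR n - 1) / (2 * INR m)) + ln da.
Definition etaC := 4 * del * Dm / Pm.
Definition K1 := 2 * PM / Pm + 1.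

Lemma del_nn : 0 <= del.
Proof. pose proof (Rabs_pos e1). lra. Qed.

Lemma e_small e : Rabs e <= del -> Rabs e <= Pm / 2 /\ - (Pm/2) <= e <= Pm/2 /\ Rabs e <= del * Dm.
Proof.
  intros H. pose proof del_nn. assert (del <= del * Dm) by nra.
  split; [lra|]. split; [apply Rabs_le_inv; lra|lra].
Qed.

Lemma dpos k : 0 < d ^ k.
Proof. apply pow_lt. lra. Qed.

Lemma INRm_pos : 1 <= INR m.
Proof. apply (le_INR 1). apply Hmn. Qed.
Lemma INRn_pos : 1 <= INR n.
Proof. apply (le_INR 1). apply Hmn. Qed.
Lemma INRD_pos : 1 <= INR D.
Proof. apply (le_INR 1). destruct Hmn as [? [? ?]]. lia. Qed.

Lemma A1_bound : Rabs (ln (INR D / INR n) + ln da - INR LA * ln d) <= etaC.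
Proof.
  destruct (e_small e2 He2) as [U2 [V2 W2]]. destruct (e_small e3 He3) as [U3 [V3 W3]].
  pose proof (dpos LA). pose proof (dpos LB). pose proof INRn_pos. pose proof INRD_pos.
  assert (E : INR D / INR n * da = d ^ LA * ((P2 + e3 * da) / (P2 + e2))).
  { rewrite HD, Hn, pow_add, <- HP32. field. split; lra. }
  assert (Hu : Rabs (e3 * da) <= Pm / 2 /\ Rabs (e3 * da) <= del * Dm).
  { rewrite Rabs_mult, (Rabs_right da) by lra. pose proof (Rabs_pos e3). split; nra. }
  rewrite <- ln_mult by (try apply Rdiv_lt_0_compat; lra).
  assert (0 < P2 + e3 * da) by (destruct Hu as [Hu1 _]; apply Rabs_le_inv in Hu1; lra).
  rewrite E, ln_mult, ln_pow by (try apply Rdiv_lt_0_compat; lra).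
  replace (INR LA * ln d + ln ((P2 + e3 * da) / (P2 + e2)) - INR LA * ln d) with
    (ln ((P2 + e3 * da) / (P2 + e2))) by ring.
  eapply Rle_trans; [apply (ln_ratio P2 Pm); [lra|lra|apply Hu|lra]|].
  unfold etaC. apply Rmult_le_compat_r; [left; apply Rinv_0_lt_compat; lra|]. lra.
Qed.

Lemma A2_bound : Rabs (ln (INR D / INR m) + ln da - INR LB * ln d - ln dJ) <= etaC.
Proof.
  destruct (e_small e1 He1) as [U1 [V1 W1]]. destruct (e_small e3 He3) as [U3 [V3 W3]].
  pose proof (dpos LA). pose proof (dpos LB). pose proof INRm_pos. pose proof INRD_pos.
  assert (E : INR D / INR m * da / dJ = d ^ LB * ((P2 + e3 * da) / (P2 + e1 * dJ))).
  { assert (EP3 : P3 = P1 * dJ / da) by (apply (Rmult_eq_reg_r da); [|lra]; rewrite HP32, <- HP12; field; lra).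
    rewrite HD, Hm, pow_add, <- HP12, EP3.
    assert (0 < P1 + e1) by lra.
    field. repeat split; try lra. nra. }
  assert (Hu : Rabs (e3 * da) <= Pm / 2 /\ Rabs (e3 * da) <= del * Dm).
  { rewrite Rabs_mult, (Rabs_right da) by lra. pose proof (Rabs_pos e3). split; nra. }
  assert (Hv : Rabs (e1 * dJ) <= Pm / 2 /\ Rabs (e1 * dJ) <= del * Dm).
  { rewrite Rabs_mult, (Rabs_right dJ) by lra. pose proof (Rabs_pos e1). split; nra. }
  replace (ln (INR D / INR m) + ln da - INR LB * ln d - ln dJ) with
    (ln (INR D / INR m * da / dJ) - INR LB * ln d).
  2:{ rewrite ln_div' by (try (apply Rmult_lt_0_compat; try apply Rdiv_lt_0_compat); lra).
      rewrite ln_mult by (try apply Rdiv_lt_0_compat; lra). ring. }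
  assert (0 < (P2 + e3 * da) / (P2 + e1 * dJ)).
  { destruct Hu as [Hu1 _]. destruct Hv as [Hv1 _]. apply Rabs_le_inv in Hu1. apply Rabs_le_inv in Hv1. apply Rdiv_lt_0_compat; lra. }
  rewrite E, ln_mult, ln_pow by lra.
  replace (INR LB * ln d + ln ((P2 + e3 * da) / (P2 + e1 * dJ)) - INR LB * ln d) with
    (ln ((P2 + e3 * da) / (P2 + e1 * dJ))) by ring.
  eapply Rle_trans; [apply (ln_ratio P2 Pm); [lra|lra|apply Hu|apply Hv]|].
  unfold etaC. apply Rmult_le_compat_r; [left; apply Rinv_0_lt_compat; lra|]. lra.
Qed.

Lemma ratio_K1 x y ex ey : Pm <= x <= PM -> Pm <= y <= PM -> Rabs ex <= del -> Rabs ey <= del ->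
  (x + ex) / (y + ey) <= K1.
Proof.
  intros Hx Hy Hex Hey. destruct (e_small ex Hex) as [_ [Vx _]]. destruct (e_small ey Hey) as [_ [Vy _]].
  unfold K1. apply (Rmult_le_reg_r (y + ey)); [lra|]. unfold Rdiv. rewrite Rmult_assoc, Rinv_l by lra.
  rewrite Rmult_1_r.
  assert (2 * PM / Pm * (y + ey) >= PM).
  { apply Rle_ge. apply (Rmult_le_reg_r Pm); [lra|].
    replace (2 * PM / Pm * (y + ey) * Pm) with (2 * PM * (y + ey)) by (field; lra). nra. }
  nra.
Qed.

Lemma Rmin_nonneg : 0 <= Rmin ((INR m - 1) / (2 * INR n)) ((INR n - 1) / (2 * INR m)).
Proof.
  pose proof INRm_pos. pose proof INRn_pos.
  apply Rmin_glb; apply Rmult_le_pos; try lra; left; apply Rinv_0_lt_compat; lra.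
Qed.

Lemma K1_pos : 1 <= K1.
Proof. unfold K1. assert (0 <= 2 * PM / Pm) by (apply Rmult_le_pos; [lra|left; apply Rinv_0_lt_compat; lra]). lra. Qed.

Lemma case_left g : LB = (LA + g)%nat -> K1 / d ^ g <= 1 ->
  Rabs (phiC - INR LA * ln d) <= / INR n + etaC + K1 / d ^ g.
Proof.
  intros HLB HK. pose proof INRm_pos. pose proof INRn_pos. pose proof (dpos g). pose proof (dpos LA).
  assert (Hr : INR m / INR n <= K1 / d ^ g).
  { rewrite Hm, Hn, HLB, pow_add.
    replace (d ^ LA * (P1 + e1) / (d ^ LA * d ^ g * (P2 + e2))) with ((P1 + e1) / (P2 + e2) / d ^ g).
    - unfold Rdiv at 1 3. apply Rmult_le_compat_r; [left; apply Rinv_0_lt_compat; auto|]. apply ratio_K1; auto.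
    - destruct (e_small e2 He2) as [_ [V _]]. field. repeat split; lra. }
  assert (Hmn' : (m <= n)%nat).
  { apply INR_le. assert (INR m / INR n <= 1) by lra.
    apply (Rmult_le_reg_r (/ INR n)); [apply Rinv_0_lt_compat; lra|]. rewrite Rinv_r by lra. exact H3. }
  assert (HM : Nat.max m n = n) by (apply Nat.max_r; auto).
  unfold phiC. rewrite HM.
  set (R0 := Rmin ((INR m - 1) / (2 * INR n)) ((INR n - 1) / (2 * INR m))).
  assert (R0b : 0 <= R0 <= K1 / d ^ g).
  { split; [apply Rmin_nonneg|]. eapply Rle_trans; [apply Rmin_l|].
    eapply Rle_trans; [|apply Hr]. unfold Rdiv. apply (Rmult_le_reg_r (2 * INR n)); [lra|].
    replace ((INR m - 1) * / (2 * INR n) * (2 * INR n)) with (INR m - 1) by (field; lra).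
    replace (INR m * / INR n * (2 * INR n)) with (2 * INR m) by (field; lra). lra. }
  replace (harmonic D - harmonic n - R0 + ln da - INR LA * ln d) with
    ((harmonic D - harmonic n - ln (INR D / INR n)) + (ln (INR D / INR n) + ln da - INR LA * ln d) + (- R0)) by ring.
  eapply Rle_trans; [apply Rabs_triang3|].
  pose proof (harm_approx n D ltac:(apply Hmn) ltac:(destruct Hmn as [? [? ?]]; lia)).
  pose proof A1_bound. rewrite Rabs_Ropp, (Rabs_right R0) by lra. lra.
Qed.

Lemma case_right g : LA = (LB + g)%nat -> K1 / d ^ g <= 1 ->
  Rabs (phiC - (INR LB * ln d + ln dJ)) <= / INR m + etaC + K1 / d ^ g.
Proof.
  intros HLA HK. pose proof INRm_pos. pose proof INRn_pos. pose proof (dpos g). pose proof (dpos LB).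
  assert (Hr : INR n / INR m <= K1 / d ^ g).
  { rewrite Hm, Hn, HLA, pow_add.
    replace (d ^ LB * (P2 + e2) / (d ^ LB * d ^ g * (P1 + e1))) with ((P2 + e2) / (P1 + e1) / d ^ g).
    - unfold Rdiv at 1 3. apply Rmult_le_compat_r; [left; apply Rinv_0_lt_compat; auto|]. apply ratio_K1; auto.
    - destruct (e_small e1 He1) as [_ [V _]]. field. repeat split; lra. }
  assert (Hmn' : (n <= m)%nat).
  { apply INR_le. assert (INR n / INR m <= 1) by lra.
    apply (Rmult_le_reg_r (/ INR m)); [apply Rinv_0_lt_compat; lra|]. rewrite Rinv_r by lra. exact H3. }
  assert (HM : Nat.max m n = m) by (apply Nat.max_l; auto).
  unfold phiC. rewrite HM.
  set (R0 := Rmin ((INR m - 1) / (2 * INR n)) ((INR n - 1) / (2 * INR m))).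
  assert (R0b : 0 <= R0 <= K1 / d ^ g).
  { split; [apply Rmin_nonneg|]. eapply Rle_trans; [apply Rmin_r|].
    eapply Rle_trans; [|apply Hr]. unfold Rdiv. apply (Rmult_le_reg_r (2 * INR m)); [lra|].
    replace ((INR n - 1) * / (2 * INR m) * (2 * INR m)) with (INR n - 1) by (field; lra).
    replace (INR n * / INR m * (2 * INR m)) with (2 * INR n) by (field; lra). lra. }
  replace (harmonic D - harmonic m - R0 + ln da - (INR LB * ln d + ln dJ)) with
    ((harmonic D - harmonic m - ln (INR D / INR m)) + (ln (INR D / INR m) + ln da - INR LB * ln d - ln dJ) + (- R0)) by ring.
  eapply Rle_trans; [apply Rabs_triang3|].
  pose proof (harm_approx m D ltac:(apply Hmn) ltac:(destruct Hmn as [? [? ?]]; lia)).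
  pose proof A2_bound. rewrite Rabs_Ropp, (Rabs_right R0) by lra. lra.
Qed.

Lemma case_mid : LA = LB ->
  Rabs (phiC - (INR LA * ln d - / (2 * dJ))) <= 2 * etaC + 2 / INR m + 2 / INR n.
Proof.
  intros HL. pose proof INRm_pos. pose proof INRn_pos. pose proof (dpos LA). pose proof INRD_pos.
  destruct (e_small e1 He1) as [U1 [V1 W1]]. destruct (e_small e2 He2) as [U2 [V2 W2]].
  assert (Heta : 0 <= etaC).
  { unfold etaC. pose proof del_nn. apply Rmult_le_pos; [nra|left; apply Rinv_0_lt_compat; lra]. }
  assert (Hr1 : Rabs (INR m / INR n - / dJ) <= etaC).
  { rewrite Hm, Hn, <- HL.
    replace (d ^ LA * (P1 + e1) / (d ^ LA * (P2 + e2)) - / dJ) with ((dJ * e1 - e2) / (dJ * (P2 + e2))).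
    2:{ rewrite <- HP12. field. repeat split; try lra. }
    eapply Rle_trans; [apply (abs_frac_le _ _ (2 * del * Dm) (Pm / 2))|].
    - unfold Rminus. eapply Rle_trans; [apply Rabs_triang|]. rewrite Rabs_Ropp, Rabs_mult, (Rabs_right dJ) by lra.
      pose proof (Rabs_pos e1). nra.
    - lra.
    - nra.
    - unfold etaC. right. field. lra. }
  assert (Hr2 : Rabs (INR n / INR m - dJ) <= etaC).
  { rewrite Hm, Hn, <- HL.
    replace (d ^ LA * (P2 + e2) / (d ^ LA * (P1 + e1)) - dJ) with ((e2 - dJ * e1) / (P1 + e1)).
    2:{ rewrite <- HP12. field. repeat split; try lra. }
    eapply Rle_trans; [apply (abs_frac_le _ _ (2 * del * Dm) (Pm / 2))|].
    - unfold Rminus. eapply Rle_trans; [apply Rabs_triang|]. rewrite Rabs_Ropp, Rabs_mult, (Rabs_right dJ) by lra.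
      pose proof (Rabs_pos e1). nra.
    - lra.
    - lra.
    - unfold etaC. right. field. lra. }
  set (t := etaC / 2 + / (2 * INR n) + / (2 * INR m)).
  assert (Ha : Rabs ((INR m - 1) / (2 * INR n) - / (2 * dJ)) <= t).
  { replace ((INR m - 1) / (2 * INR n) - / (2 * dJ)) with ((INR m / INR n - / dJ) / 2 + (- / (2 * INR n))) by (field; lra).
    eapply Rle_trans; [apply Rabs_triang|]. rewrite Rabs_Ropp.
    unfold Rdiv at 1. rewrite Rabs_mult, (Rabs_right (/2)) by lra.
    rewrite (Rabs_right (/ (2 * INR n))) by (left; apply Rinv_0_lt_compat; lra).
    assert (0 < / (2 * INR m)) by (apply Rinv_0_lt_compat; lra). unfold t. lra. }
  assert (Hb : Rabs ((INR n - 1) / (2 * INR m) - dJ / 2) <= t).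
  { replace ((INR n - 1) / (2 * INR m) - dJ / 2) with ((INR n / INR m - dJ) / 2 + (- / (2 * INR m))) by (field; lra).
    eapply Rle_trans; [apply Rabs_triang|]. rewrite Rabs_Ropp.
    unfold Rdiv at 1. rewrite Rabs_mult, (Rabs_right (/2)) by lra.
    rewrite (Rabs_right (/ (2 * INR m))) by (left; apply Rinv_0_lt_compat; lra).
    assert (0 < / (2 * INR n)) by (apply Rinv_0_lt_compat; lra). unfold t. lra. }
  pose proof (Rmin_close _ _ _ _ _ Ha Hb) as Hmin.
  rewrite (Rmin_left (/ (2 * dJ)) (dJ / 2)) in Hmin.
  2:{ assert (/ (2 * dJ) <= / 2) by (apply Rinv_le_contravar; lra). lra. }
  set (M := Nat.max m n).
  assert (HMn : (n <= M)%nat) by apply Nat.le_max_r.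
  assert (HMm : (m <= M)%nat) by apply Nat.le_max_l.
  assert (HMD : (M <= D)%nat) by apply Hmn.
  assert (INR n <= INR M) by (apply le_INR; auto).
  assert (T2 : Rabs (ln (INR D / INR M) + ln da - INR LA * ln d) <= etaC).
  { pose proof A1_bound as B1. pose proof A2_bound as B2. rewrite <- HL in B2.
    assert (ln dJ >= 0) by (apply Rle_ge, ln_ge0; lra).
    apply Rabs_le_inv in B1. apply Rabs_le_inv in B2. apply Rabs_le.
    assert (L1 : ln (INR D / INR M) <= ln (INR D / INR n)).
    { apply ln_mono; [apply Rdiv_lt_0_compat; lra|]. unfold Rdiv. apply Rmult_le_compat_l; [lra|].
      apply Rinv_le_contravar; lra. }
    unfold M in *. destruct (Nat.max_spec m n) as [[_ E]|[_ E]]; rewrite E in *; split; lra. }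
  pose proof (harm_approx M D ltac:(lia) HMD) as T1.
  assert (/ INR M <= / INR n) by (apply Rinv_le_contravar; lra).
  unfold phiC. fold M.
  set (R0 := Rmin ((INR m - 1) / (2 * INR n)) ((INR n - 1) / (2 * INR m))) in *.
  replace (harmonic D - harmonic M - R0 + ln da - (INR LA * ln d - / (2 * dJ))) with
    ((harmonic D - harmonic M - ln (INR D / INR M)) + (ln (INR D / INR M) + ln da - INR LA * ln d) + (- (R0 - / (2 * dJ)))) by ring.
  eapply Rle_trans; [apply Rabs_triang3|]. rewrite Rabs_Ropp.
  unfold t in Hmin.
  assert (/ (2 * INR n) <= / INR n) by (apply Rinv_le_contravar; lra).
  assert (/ (2 * INR m) <= / INR m) by (apply Rinv_le_contravar; lra).
  assert (0 < / INR m) by (apply Rinv_0_lt_compat; lra).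
  unfold Rdiv. lra.
Qed.
End Core.

Lemma pow_big d : 1 < d -> forall B, exists G, forall g, (G <= g)%nat -> B <= d ^ g.
Proof.
  intros Hd B. destruct (Rle_dec B 0) as [HB|HB].
  - exists 0%nat. intros. left. apply Rle_lt_trans with 0; auto. apply pow_lt. lra.
  - assert (Hx : Rabs (/ d) < 1).
    { rewrite Rabs_right by (left; apply Rinv_0_lt_compat; lra).
      rewrite <- Rinv_1. apply Rinv_lt_contravar; lra. }
    destruct (pow_lt_1_zero (/ d) Hx (/ B)) as [G HG]; [apply Rinv_0_lt_compat; lra|].
    exists G. intros g Hg. specialize (HG g Hg).
    rewrite pow_inv in HG. rewrite Rabs_right in HG by (left; apply Rinv_0_lt_compat, pow_lt; lra).
    assert (0 < d ^ g) by (apply pow_lt; lra).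
    destruct (Rle_dec B (d ^ g)) as [|Hn]; auto. exfalso.
    assert (/ B < / d ^ g) by (apply Rinv_lt_contravar; nra). lra.
Qed.

Lemma final_sum (mf nf : nat -> nat) (D K : nat) (ph : nat -> R) (X t : R) :
  (0 < D)%nat -> Rsum (fun a => INR (mf a) * INR (nf a)) K = INR D ->
  (forall a, (a < K)%nat -> (0 < mf a * nf a)%nat -> Rabs (ph a - X) <= t) ->
  Rabs (Rsum (fun a => if Nat.ltb 0 (mf a * nf a) then INR (mf a) * INR (nf a) / INR D * ph a else 0) K - X) <= t.
Proof.
  intros HD HS Hb.
  assert (HD' : 0 < INR D) by (apply lt_0_INR; auto).
  set (rho := fun a => INR (mf a) * INR (nf a) / INR D).
  assert (Hrho : forall a, 0 <= rho a).
  { intros a. unfold rho. apply Rmult_le_pos; [apply Rmult_le_pos; apply pos_INR|left; apply Rinv_0_lt_compat; auto]. }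
  assert (Hs1 : Rsum rho K = 1).
  { unfold rho. unfold Rdiv. rewrite (Rsum_ext _ (fun a => / INR D * (INR (mf a) * INR (nf a)))) by (intros; ring).
    rewrite Rsum_scal, HS. field. lra. }
  rewrite (Rsum_ext _ (fun a => rho a * ph a)).
  2:{ intros a _. unfold rho. destruct (Nat.ltb_spec 0 (mf a * nf a)); [reflexivity|].
      assert (mf a = 0%nat \/ nf a = 0%nat) by (destruct (mf a), (nf a); simpl in *; lia).
      destruct H0 as [E|E]; rewrite E; simpl; field; lra. }
  replace (Rsum (fun a => rho a * ph a) K - X) with (Rsum (fun a => rho a * (ph a - X)) K).
  2:{ rewrite (Rsum_ext _ (fun a => rho a * ph a - X * rho a)) by (intros; ring).
      rewrite Rsum_minus, Rsum_scal, Hs1. ring. }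
  eapply Rle_trans; [apply Rsum_abs_le|].
  apply Rle_trans with (Rsum (fun a => rho a * t) K).
  - apply Rsum_le. intros a Ha. rewrite Rabs_mult, (Rabs_right (rho a)) by (apply Rle_ge; auto).
    destruct (Nat.ltb_spec 0 (mf a * nf a)).
    + apply Rmult_le_compat_l; auto.
    + unfold rho. assert (mf a = 0%nat \/ nf a = 0%nat) by (destruct (mf a), (nf a); simpl in *; lia).
      destruct H0 as [E|E]; rewrite E; simpl; lra.
  - rewrite (Rsum_ext _ (fun a => t * rho a)) by (intros; ring). rewrite Rsum_scal, Hs1. lra.
Qed.

Definition Cc k := 2 / INR (k+2).
Definition Pab k a b := 2 * Cc k * sv k a 0 * sv k b 0.

Lemma Cc_pos k : 0 < Cc k.
Proof. unfold Cc. apply Rdiv_lt_0_compat; [lra|apply N2_pos]. Qed.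

Lemma sv_a0_le1 k a : sv k a 0 <= 1.
Proof. pose proof (sv_le1 k a 0). apply Rabs_le_inv in H. lra. Qed.

Lemma Pab_bounds k a b : (a <= k)%nat -> (b <= k)%nat -> Pab k 0 0 <= Pab k a b <= 2 * Cc k.
Proof.
  intros Ha Hb. unfold Pab. pose proof (Cc_pos k). pose proof (sv00_pos k).
  pose proof (sv_a0_ge k a Ha). pose proof (sv_a0_ge k b Hb). pose proof (sv_a0_le1 k a). pose proof (sv_a0_le1 k b).
  split.
  - assert (sv k 0 0 * sv k 0 0 <= sv k a 0 * sv k b 0) by (apply Rmult_le_compat; lra). nra.
  - assert (sv k a 0 * sv k b 0 <= 1) by nra. nra.
Qed.


Lemma parity_pow (a b : nat) : Nat.even (a + b) = true -> (-1)^a * (-1)^b = 1.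
Proof. intros H. rewrite <- pow_add. apply pow_m1_even_b. auto. Qed.

Lemma alpha_data k jj JJ L LA al del N0 :
  (2 <= k)%nat -> (0 < jj)%nat -> (jj < k)%nat -> (JJ <= k)%nat -> (LA <= L)%nat ->
  (0 < Dpaths k jj L JJ)%nat -> (al <= k)%nat ->
  (0 < m_alpha k jj LA al * n_alpha k jj JJ (L - LA) al)%nat ->
  (forall n, (N0 <= n)%nat -> Eb k jj n <= del) -> (N0 <= LA)%nat -> (N0 <= L - LA)%nat ->
  exists e1 e2 e3,
    INR (m_alpha k jj LA al) = qdim k jj ^ LA * (Pab k 0 al + e1) /\
    INR (n_alpha k jj JJ (L - LA) al) = qdim k jj ^ (L - LA) * (Pab k al JJ + e2) /\
    INR (Dpaths k jj L JJ) = qdim k jj ^ (LA + (L - LA)) * (Pab k 0 JJ + e3) /\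
    Rabs e1 <= del /\ Rabs e2 <= del /\ Rabs e3 <= del /\
    (1 <= m_alpha k jj LA al)%nat /\ (1 <= n_alpha k jj JJ (L - LA) al)%nat /\
    (Nat.max (m_alpha k jj LA al) (n_alpha k jj JJ (L - LA) al) <= Dpaths k jj L JJ)%nat.
Proof.
  intros Hk Hjj1 Hjj2 HJ HLA HD Hal Hmn HEb HN1 HN2.
  set (LB := (L - LA)%nat) in *.
  assert (HL : L = (LA + LB)%nat) by (unfold LB; lia).
  assert (Hd0 : 0 < lam k jj 0) by (rewrite lam0; pose proof (qdim_gt1 k jj ltac:(lia) ltac:(lia)); lra).
  set (m := m_alpha k jj LA al) in *. set (n := n_alpha k jj JJ LB al) in *.
  assert (Hm1 : (1 <= m)%nat) by (destruct m; simpl in Hmn; lia).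
  assert (Hn1 : (1 <= n)%nat) by (destruct n; [rewrite Nat.mul_0_r in Hmn|]; lia).
  assert (Pm : Nat.even (al + jj * LA) = true) by (apply (Dpaths_parity k); unfold m, m_alpha in Hm1; lia).
  assert (PD : Nat.even (JJ + jj * L) = true) by (apply (Dpaths_parity k); lia).
  assert (Pn : Nat.even (al + JJ + jj * LB) = true).
  { apply even_true in Pm. apply even_true in PD. destruct Pm as [p Hp]. destruct PD as [q Hq].
    rewrite HL, Nat.mul_add_distr_l in Hq. apply (even_intro _ (p + q - jj * LA)). lia. }
  destruct (W_decomp k jj 0 al LA ltac:(lia) Hd0) as [e1 [E1 B1]].
  destruct (W_decomp k jj al JJ LB ltac:(lia) Hd0) as [e2 [E2 B2]].
  destruct (W_decomp k jj 0 JJ L ltac:(lia) Hd0) as [e3 [E3 B3]].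
  exists e1, e2, e3.
  assert (Im : INR m = qdim k jj ^ LA * (Pab k 0 al + e1)).
  { unfold m, m_alpha. rewrite Dpaths_W by lia. rewrite E1, lam0. f_equal. f_equal.
    unfold Pab, Cc. simpl ((-1)^0). rewrite Rmult_1_l. rewrite (parity_pow al (jj * LA) Pm). ring. }
  assert (In : INR n = qdim k jj ^ LB * (Pab k al JJ + e2)).
  { unfold n. rewrite nalpha_W by lia. rewrite E2, lam0. f_equal. f_equal.
    unfold Pab, Cc.
    replace ((-1)^al * (-1)^JJ * (-1)^(jj*LB)) with 1; [ring|].
    rewrite <- !pow_add. symmetry. apply pow_m1_even_b. exact Pn. }
  assert (ID : INR (Dpaths k jj L JJ) = qdim k jj ^ (LA + LB) * (Pab k 0 JJ + e3)).
  { rewrite Dpaths_W by lia. rewrite E3, lam0, <- HL. f_equal. f_equal.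
    unfold Pab, Cc. simpl ((-1)^0). rewrite Rmult_1_l. rewrite (parity_pow JJ (jj * L) PD). ring. }
  assert (Hsum : Rsum (fun a => INR (m_alpha k jj LA a) * INR (n_alpha k jj JJ LB a)) (S k) = INR (Dpaths k jj L JJ)).
  { rewrite (Rsum_ext _ (fun a => W k jj 0 a LA * W k jj a JJ LB)).
    - rewrite W_split by lia. rewrite <- HL. symmetry. apply Dpaths_W; lia.
    - intros a Ha. unfold m_alpha. rewrite Dpaths_W, nalpha_W by lia. reflexivity. }
  assert (Hge : INR m * INR n <= INR (Dpaths k jj L JJ)).
  { rewrite <- Hsum. apply (Rsum_ge_term (fun a => INR (m_alpha k jj LA a) * INR (n_alpha k jj JJ LB a))).
    - lia.
    - intros. apply Rmult_le_pos; apply pos_INR. }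
  assert (1 <= INR m) by (apply (le_INR 1); auto). assert (1 <= INR n) by (apply (le_INR 1); auto).
  repeat split; auto.
  - unfold Eb in *. eapply Rle_trans; [exact B1|]. apply HEb. auto.
  - eapply Rle_trans; [exact B2|]. apply HEb. auto.
  - eapply Rle_trans; [exact B3|]. apply HEb. lia.
  - apply INR_le. destruct (Nat.max_spec m n) as [[_ E]|[_ E]]; rewrite E; nra.
Qed.

Lemma Pab_rel1 k a J : Pab k 0 a * qdim k J = Pab k a J.
Proof. unfold Pab. rewrite qdim_sv. pose proof (sv00_pos k). field. lra. Qed.

Lemma Pab_rel2 k a J : Pab k 0 J * qdim k a = Pab k a J.
Proof. unfold Pab. rewrite qdim_sv. pose proof (sv00_pos k). field. lra. Qed.

Lemma digamma_diff D M : digamma_nat (D + 1) - digamma_nat (M + 1) = harmonic D - harmonic M.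
Proof. unfold digamma_nat. rewrite !Nat.add_sub. ring. Qed.

Lemma Pm_pos k : 0 < Pab k 0 0.
Proof. unfold Pab. pose proof (Cc_pos k). pose proof (sv00_pos k). replace (2 * Cc k * sv k 0 0 * sv k 0 0) with ((2 * Cc k) * (sv k 0 0 * sv k 0 0)) by ring. apply Rmult_lt_0_compat; [lra|apply Rmult_lt_0_compat; lra]. Qed.

Lemma Dm_ge1 k : 1 <= / sv k 0 0.
Proof.
  pose proof (sv00_pos k). pose proof (sv_a0_le1 k 0). rewrite <- Rinv_1. apply Rinv_le_contravar; lra.
Qed.

Lemma alpha_all k jj JJ L LA al del N0 t :
  (2 <= k)%nat -> (0 < jj)%nat -> (jj < k)%nat -> (JJ <= k)%nat -> (LA <= L)%nat ->
  (0 < Dpaths k jj L JJ)%nat -> (al <= k)%nat ->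
  (0 < m_alpha k jj LA al * n_alpha k jj JJ (L - LA) al)%nat ->
  (forall n, (N0 <= n)%nat -> Eb k jj n <= del) -> (N0 <= LA)%nat -> (N0 <= L - LA)%nat ->
  0 < t -> del * / sv k 0 0 <= Pab k 0 0 / 2 -> etaC (Pab k 0 0) del (/ sv k 0 0) <= t / 4 ->
  16 / (t * Pab k 0 0) <= qdim k jj ^ LA -> 16 / (t * Pab k 0 0) <= qdim k jj ^ (L - LA) ->
  let m := m_alpha k jj LA al in let n := n_alpha k jj JJ (L - LA) al in let D := Dpaths k jj L JJ in
  let ph := phiC (qdim k al) m n D in
  let d := qdim k jj in let K := K1 (Pab k 0 0) (2 * Cc k) in
  (forall g, (L - LA = LA + g)%nat -> 4 * K / t <= d ^ g -> K <= d ^ g ->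
     Rabs (ph - INR LA * ln d) <= t) /\
  (forall g, (LA = (L - LA) + g)%nat -> 4 * K / t <= d ^ g -> K <= d ^ g ->
     Rabs (ph - (INR (L - LA) * ln d + ln (qdim k JJ))) <= t) /\
  ((LA = L - LA)%nat -> Rabs (ph - (INR LA * ln d - / (2 * qdim k JJ))) <= t).
Proof.
  intros Hk Hj1 Hj2 HJ HLA HD0 Hal Hmn HEb HN1 HN2 Ht Hdel Heta HB1 HB2 m n D ph d K.
  destruct (alpha_data k jj JJ L LA al del N0 Hk Hj1 Hj2 HJ HLA HD0 Hal Hmn HEb HN1 HN2)
    as [e1 [e2 [e3 [Im [In [ID [B1 [B2 [B3 [Hm1 [Hn1 HMD]]]]]]]]]]].
  fold m n D d in Im, In, ID, Hm1, Hn1, HMD. fold d in HB1, HB2.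
  set (Pm := Pab k 0 0) in *. set (PM := 2 * Cc k) in *. set (Dm := / sv k 0 0) in *.
  assert (Hd : 1 < d) by (apply qdim_gt1; lia).
  assert (HPm : 0 < Pm) by apply Pm_pos.
  assert (HDm : 1 <= Dm) by apply Dm_ge1.
  assert (Hda : 1 <= qdim k al <= Dm) by (split; [apply qdim_ge1; auto|apply qdim_le]).
  assert (HdJ : 1 <= qdim k JJ <= Dm) by (split; [apply qdim_ge1; auto|apply qdim_le]).
  assert (HP1 : Pm <= Pab k 0 al <= PM) by (apply Pab_bounds; lia).
  assert (HP2 : Pm <= Pab k al JJ <= PM) by (apply Pab_bounds; lia).
  pose proof (Pab_rel1 k al JJ) as HP12. pose proof (Pab_rel2 k al JJ) as HP32.
  assert (Hmn' : (1 <= m)%nat /\ (1 <= n)%nat /\ (Nat.max m n <= D)%nat) by auto.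
  assert (Hdel0 : 0 <= del) by (pose proof (Rabs_pos e1); lra).
  assert (Hdp : del <= Pm / 2) by nra.
  assert (Im' : / INR m <= t / 8).
  { assert (0 < d ^ LA) by (apply pow_lt; lra).
    apply Rabs_le_inv in B1.
    assert (INR m >= d ^ LA * (Pm / 2)) by (rewrite Im; apply Rle_ge, Rmult_le_compat_l; lra).
    assert (16 / (t * Pm) * (Pm / 2) = 8 / t) by (field; lra).
    assert (d ^ LA * (Pm / 2) >= 16 / (t * Pm) * (Pm / 2)) by (apply Rle_ge, Rmult_le_compat_r; lra).
    assert (8 / t <= INR m) by lra.
    assert (0 < 8 / t) by (apply Rdiv_lt_0_compat; lra).
    replace (t / 8) with (/ (8 / t)) by (field; lra). apply Rinv_le_contravar; lra. }
  assert (In' : / INR n <= t / 8).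
  { assert (0 < d ^ (L - LA)) by (apply pow_lt; lra).
    apply Rabs_le_inv in B2.
    assert (INR n >= d ^ (L - LA) * (Pm / 2)) by (rewrite In; apply Rle_ge, Rmult_le_compat_l; lra).
    assert (16 / (t * Pm) * (Pm / 2) = 8 / t) by (field; lra).
    assert (d ^ (L - LA) * (Pm / 2) >= 16 / (t * Pm) * (Pm / 2)) by (apply Rle_ge, Rmult_le_compat_r; lra).
    assert (8 / t <= INR n) by lra.
    assert (0 < 8 / t) by (apply Rdiv_lt_0_compat; lra).
    replace (t / 8) with (/ (8 / t)) by (field; lra). apply Rinv_le_contravar; lra. }
  assert (HK : forall g, 4 * K / t <= d ^ g -> K / d ^ g <= t / 4).
  { intros g Hg. assert (0 < d ^ g) by (apply pow_lt; lra).
    assert (1 <= K) by (apply (K1_pos (Pab k 0 al) Pm PM HPm HP1)).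
    apply (Rmult_le_reg_r (d ^ g)); auto. unfold Rdiv. rewrite Rmult_assoc, Rinv_l by lra.
    apply (Rmult_le_reg_r (4 / t)); [apply Rdiv_lt_0_compat; lra|].
    replace (t * / 4 * d ^ g * (4 / t)) with (d ^ g) by (field; lra).
    replace (K * 1 * (4 / t)) with (4 * K / t) by (field; lra). lra. }
  assert (HK' : forall g, K <= d ^ g -> K / d ^ g <= 1).
  { intros g Hg. assert (0 < d ^ g) by (apply pow_lt; lra).
    apply (Rmult_le_reg_r (d ^ g)); auto. unfold Rdiv. rewrite Rmult_assoc, Rinv_l by lra. lra. }
  assert (0 <= / INR m) by (left; apply Rinv_0_lt_compat; apply (lt_INR 0); lia).
  assert (0 <= / INR n) by (left; apply Rinv_0_lt_compat; apply (lt_INR 0); lia).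
  split; [|split].
  - intros g Hg H4 H5.
    pose proof (case_left d (qdim k al) (qdim k JJ) (Pab k 0 al) (Pab k al JJ) (Pab k 0 JJ) e1 e2 e3 Pm PM del Dm
       m n D LA (L - LA) Hd Hda HdJ HPm HP1 HP2 HP32 B1 B2 B3 Hdel Im In ID Hmn' g Hg (HK' g H5)) as C.
    unfold ph. pose proof (HK g H4). fold K in C. lra.
  - intros g Hg H4 H5.
    pose proof (case_right d (qdim k al) (qdim k JJ) (Pab k 0 al) (Pab k al JJ) (Pab k 0 JJ) e1 e2 e3 Pm PM del Dm
       m n D LA (L - LA) Hd Hda HdJ HPm HP1 HP2 HP12 HP32 B1 B2 B3 Hdel Im In ID Hmn' g Hg (HK' g H5)) as C.
    unfold ph. pose proof (HK g H4). fold K in C. lra.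
  - intros Hg.
    pose proof (case_mid d (qdim k al) (qdim k JJ) (Pab k 0 al) (Pab k al JJ) (Pab k 0 JJ) e1 e2 e3 Pm PM del Dm
       m n D LA (L - LA) Hd Hda HdJ HPm HP1 HP2 HP12 HP32 B1 B2 B3 Hdel Im In ID Hmn' Hg) as C.
    unfold ph. unfold Rdiv in C. lra.
Qed.

Lemma sum_mn k jj JJ L LA : (jj <= k)%nat -> (JJ <= k)%nat -> (LA <= L)%nat ->
  Rsum (fun a => INR (m_alpha k jj LA a) * INR (n_alpha k jj JJ (L - LA) a)) (S k) = INR (Dpaths k jj L JJ).
Proof.
  intros Hjj HJ HLA.
  rewrite (Rsum_ext _ (fun a => W k jj 0 a LA * W k jj a JJ (L - LA))).
  - rewrite W_split by lia. replace (LA + (L - LA))%nat with L by lia. symmetry. apply Dpaths_W; lia.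
  - intros a Ha. unfold m_alpha. rewrite Dpaths_W, nalpha_W by lia. reflexivity.
Qed.

Lemma fin_step k jj JJ L LA X t : (jj <= k)%nat -> (JJ <= k)%nat -> (LA <= L)%nat ->
  (0 < Dpaths k jj L JJ)%nat ->
  (forall al, (al < S k)%nat -> (0 < m_alpha k jj LA al * n_alpha k jj JJ (L - LA) al)%nat ->
     Rabs (phiC (qdim k al) (m_alpha k jj LA al) (n_alpha k jj JJ (L - LA) al) (Dpaths k jj L JJ) - X) <= t) ->
  Rabs (avgEntropy k jj JJ L LA - X) <= t.
Proof.
  intros Hjj HJ HLA HD H. unfold avgEntropy. cbv zeta.
  apply (final_sum (fun a => m_alpha k jj LA a) (fun a => n_alpha k jj JJ (L - LA) a) (Dpaths k jj L JJ) (S k)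
    (fun a => digamma_nat (Dpaths k jj L JJ + 1) -
       digamma_nat (Nat.max (m_alpha k jj LA a) (n_alpha k jj JJ (L - LA) a) + 1) -
       Rmin ((INR (m_alpha k jj LA a) - 1) / (2 * INR (n_alpha k jj JJ (L - LA) a)))
            ((INR (n_alpha k jj JJ (L - LA) a) - 1) / (2 * INR (m_alpha k jj LA a))) +
       ln (qdim k a))); auto.
  - apply sum_mn; auto.
  - intros a Ha Hmn. specialize (H a Ha Hmn). unfold phiC in H. rewrite digamma_diff. exact H.
Qed.

Theorem mainTheorem3 (k jj JJ : nat) (f : R) :
  (2 <= k)%nat -> (0 < jj)%nat -> (jj < k)%nat -> (JJ <= k)%nat ->
  0 < f < 1 ->
  forall eps : R, 0 < eps ->
  exists N : nat, forall L LA : nat,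
    (N <= L)%nat -> INR LA = f * INR L -> (0 < Dpaths k jj L JJ)%nat ->
    Rabs (avgEntropy k jj JJ L LA - mainTerm k jj JJ L f) < eps.
Proof.
  intros Hk Hj0 Hjk HJ Hf eps Heps.
  set (t := eps / 2).
  assert (Ht : 0 < t) by (unfold t; lra).
  set (Pm := Pab k 0 0). set (Dm := / sv k 0 0). set (d := qdim k jj).
  set (K := K1 Pm (2 * Cc k)).
  assert (HPm : 0 < Pm) by apply Pm_pos.
  assert (HDm : 1 <= Dm) by apply Dm_ge1.
  assert (Hd : 1 < d) by (apply qdim_gt1; lia).
  set (del := Rmin (t * Pm / (16 * Dm)) (Pm / (2 * Dm))).
  assert (Hdel1 : del <= t * Pm / (16 * Dm)) by apply Rmin_l.
  assert (Hdel2 : del <= Pm / (2 * Dm)) by apply Rmin_r.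
  assert (Hdel0 : 0 < del).
  { unfold del. apply Rmin_glb_lt; apply Rdiv_lt_0_compat; nra. }
  assert (HdelDm : del * / sv k 0 0 <= Pm / 2).
  { fold Dm. apply (Rmult_le_compat_r Dm) in Hdel2; [|lra].
    replace (Pm / (2 * Dm) * Dm) with (Pm / 2) in Hdel2 by (field; lra). lra. }
  assert (Heta : etaC Pm del Dm <= t / 4).
  { unfold etaC. apply (Rmult_le_compat_r (4 * Dm / Pm)) in Hdel1; [|left; apply Rdiv_lt_0_compat; lra].
    replace (t * Pm / (16 * Dm) * (4 * Dm / Pm)) with (t / 4) in Hdel1 by (field; lra).
    replace (4 * del * Dm / Pm) with (del * (4 * Dm / Pm)) by (field; lra). lra. }
  destruct (Eb_to0 k jj ltac:(lia) ltac:(lia) del Hdel0) as [N0 HN0].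
  set (B := Rmax (4 * K / t) (Rmax K (16 / (t * Pm)))).
  destruct (pow_big d Hd B) as [G HG].
  assert (HB : forall g, (G <= g)%nat -> 4 * K / t <= d ^ g /\ K <= d ^ g /\ 16 / (t * Pm) <= d ^ g).
  { intros g Hg. specialize (HG g Hg). unfold B in HG.
    pose proof (Rmax_l (4 * K / t) (Rmax K (16 / (t * Pm)))).
    pose proof (Rmax_r (4 * K / t) (Rmax K (16 / (t * Pm)))).
    pose proof (Rmax_l K (16 / (t * Pm))). pose proof (Rmax_r K (16 / (t * Pm))). repeat split; lra. }
  set (Nm := Nat.max N0 G).
  assert (HNm : forall x, (Nm <= x)%nat -> (N0 <= x)%nat /\ (G <= x)%nat) by (intros; unfold Nm in *; lia).
  assert (Nat_of : forall x : nat, INR Nm < INR x -> (Nm <= x)%nat).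
  { intros x Hx. apply INR_lt in Hx. lia. }
  destruct (total_order_T f (1/2)) as [[Hlt|Heq]|Hgt].
  -
    set (c := Rmin f (1 - 2 * f)).
    assert (Hc : 0 < c) by (unfold c; apply Rmin_glb_lt; lra).
    destruct (INR_archimed c (INR Nm)) as [N HN]; [lra|].
    exists N. intros L LA HL HLA HD.
    assert (HLr : INR N <= INR L) by (apply le_INR; auto).
    assert (c <= f) by apply Rmin_l. assert (c <= 1 - 2 * f) by apply Rmin_r.
    assert (0 <= INR N) by apply pos_INR.
    assert (HcL : INR Nm < c * INR L) by nra.
    assert (HLA_L : (LA <= L)%nat) by (apply INR_le; rewrite HLA; pose proof (pos_INR L); nra).
    assert (HLB : INR (L - LA) = (1 - f) * INR L) by (rewrite minus_INR by auto; lra).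
    assert (HNLA : (Nm <= LA)%nat) by (apply Nat_of; rewrite HLA; pose proof (pos_INR L); nra).
    assert (HLL : (LA <= L - LA)%nat) by (apply INR_le; rewrite HLB, HLA; pose proof (pos_INR L); nra).
    set (g := (L - LA - LA)%nat).
    assert (Hg : (Nm <= g)%nat).
    { apply Nat_of. unfold g. rewrite (minus_INR (L - LA) LA) by auto.
      rewrite HLB, HLA. pose proof (pos_INR L). nra. }
    assert (Hmain : mainTerm k jj JJ L f = INR LA * ln d).
    { unfold mainTerm. destruct (Rle_dec f (1/2)); [|lra]. destruct (Req_EM_T f (1/2)); [lra|].
      rewrite HLA. fold d. ring. }
    rewrite Hmain.
    apply Rle_lt_trans with t; [|unfold t; lra].
    apply fin_step; try lia; auto.
    intros al Hal Hmn.
    destruct (HNm _ HNLA) as [A1 A2]. destruct (HNm _ Hg) as [A3 A4].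
    destruct (HB LA A2) as [_ [_ B1]]. destruct (HB (L - LA)%nat ltac:(unfold g in *; lia)) as [_ [_ B2]].
    destruct (HB g A4) as [B3 [B4 _]].
    destruct (alpha_all k jj JJ L LA al del N0 t Hk Hj0 Hjk HJ HLA_L HD ltac:(lia) Hmn HN0 A1
       ltac:(unfold g in *; lia) Ht HdelDm Heta B1 B2) as [C _].
    apply (C g); auto. unfold g; lia.
  -
    subst f.
    destruct (INR_archimed (1/2) (INR Nm)) as [N HN]; [lra|].
    exists N. intros L LA HL HLA HD.
    assert (HLr : INR N <= INR L) by (apply le_INR; auto).
    assert (HLA_L : (LA <= L)%nat) by (apply INR_le; rewrite HLA; pose proof (pos_INR L); nra).
    assert (HLB : INR (L - LA) = INR LA) by (rewrite minus_INR by auto; lra).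
    apply INR_eq in HLB.
    assert (HNLA : (Nm <= LA)%nat) by (apply Nat_of; rewrite HLA; pose proof (pos_INR L); nra).
    assert (Hmain : mainTerm k jj JJ L (1/2) = INR LA * ln d - / (2 * qdim k JJ)).
    { unfold mainTerm. destruct (Rle_dec (1/2) (1/2)); [|lra]. destruct (Req_EM_T (1/2) (1/2)); [|lra].
      rewrite HLA. fold d. pose proof (qdim_ge1 k JJ HJ). field. lra. }
    rewrite Hmain.
    apply Rle_lt_trans with t; [|unfold t; lra].
    apply fin_step; try lia; auto.
    intros al Hal Hmn.
    destruct (HNm _ HNLA) as [A1 A2].
    destruct (HB LA A2) as [_ [_ B1]].
    destruct (alpha_all k jj JJ L LA al del N0 t Hk Hj0 Hjk HJ HLA_L HD ltac:(lia) Hmn HN0 A1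
       ltac:(lia) Ht HdelDm Heta B1 ltac:(rewrite HLB; exact B1)) as [_ [_ C]].
    apply C. lia.
  -
    set (c := Rmin (1 - f) (2 * f - 1)).
    assert (Hc : 0 < c) by (unfold c; apply Rmin_glb_lt; lra).
    destruct (INR_archimed c (INR Nm)) as [N HN]; [lra|].
    exists N. intros L LA HL HLA HD.
    assert (HLr : INR N <= INR L) by (apply le_INR; auto).
    assert (c <= 1 - f) by apply Rmin_l. assert (c <= 2 * f - 1) by apply Rmin_r.
    assert (0 <= INR N) by apply pos_INR.
    assert (HcL : INR Nm < c * INR L) by nra.
    assert (HLA_L : (LA <= L)%nat) by (apply INR_le; rewrite HLA; pose proof (pos_INR L); nra).
    assert (HLB : INR (L - LA) = (1 - f) * INR L) by (rewrite minus_INR by auto; lra).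
    assert (HNLB : (Nm <= L - LA)%nat) by (apply Nat_of; rewrite HLB; pose proof (pos_INR L); nra).
    assert (HLL : (L - LA <= LA)%nat) by (apply INR_le; rewrite HLB, HLA; pose proof (pos_INR L); nra).
    set (g := (LA - (L - LA))%nat).
    assert (Hg : (Nm <= g)%nat).
    { apply Nat_of. unfold g. rewrite minus_INR.
      - rewrite HLB, HLA. pose proof (pos_INR L). nra.
      - apply INR_le. rewrite HLB, HLA. pose proof (pos_INR L). nra. }
    assert (Hmain : mainTerm k jj JJ L f = INR (L - LA) * ln d + ln (qdim k JJ)).
    { unfold mainTerm. destruct (Rle_dec f (1/2)); [lra|].
      rewrite HLB. fold d. ring. }
    rewrite Hmain.
    apply Rle_lt_trans with t; [|unfold t; lra].
    apply fin_step; try lia; auto.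
    intros al Hal Hmn.
    destruct (HNm _ HNLB) as [A1 A2]. destruct (HNm _ Hg) as [A3 A4].
    destruct (HB (L - LA)%nat A2) as [_ [_ B2]]. destruct (HB LA ltac:(unfold g in *; lia)) as [_ [_ B1]].
    destruct (HB g A4) as [B3 [B4 _]].
    destruct (alpha_all k jj JJ L LA al del N0 t Hk Hj0 Hjk HJ HLA_L HD ltac:(lia) Hmn HN0
       ltac:(unfold g in *; lia) A1 Ht HdelDm Heta B1 B2) as [_ [C _]].
    apply (C g); auto. unfold g; lia.
Qed.
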